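(* (i) The locus of the incenter $X_1$ (triangle center function $h\equiv 1$) over the 3-periodics of $E$ is the ellipse $x^2/a_1^2+y^2/b_1^2=1$ with $a_1=\dfrac{\delta-b^2}{a}$, $b_1=\dfrac{a^2-\delta}{b}$. (ii) The set of all excenters of all 3-periodics of $E$ is the ellipse $x^2/a_e^2+y^2/b_e^2=1$ with $a_e=\dfrac{b^2+\delta}{a}$, $b_e=\dfrac{a^2+\delta}{b}$.
   Context: Fix real numbers $a>b>0$, let $E$ be the ellipse $x^2/a^2+y^2/b^2=1$ and $\delta=\sqrt{a^4-a^2b^2+b^4}$. A 3-periodic is a non-degenerate triangle $P_1P_2P_3$ with all vertices on $E$ such that at each vertex $P_j$ the normal line to $E$ at $P_j$ bisects the interior angle of the triangle at $P_j$. For a triangle let $s_1=|P_2P_3|$, $s_2=|P_3P_1|$, $s_3=|P_1P_2|$. The point with trilinear coordinates $p:q:r$ is the Cartesian point $\dfrac{p s_1P_1+q s_2P_2+r s_3P_3}{p s_1+q s_2+r s_3}$. The incenter has trilinears $1:1:1$; the three excenters have trilinears $-1:1:1$, $1:-1:1$, $1:1:-1$. The locus of a center is the set of its positions over all 3-periodics. *)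

(* Defs.v *)
From Stdlib Require Import Reals.
Open Scope R_scope.

Definition pt := (R * R)%type.

Definition dist (P Q : pt) : R :=
  sqrt ((fst P - fst Q) ^ 2 + (snd P - snd Q) ^ 2).

Definition cross (u1 u2 v1 v2 : R) : R := u1 * v2 - u2 * v1.

Definition on_ellipse (a b : R) (P : pt) : Prop :=
  (fst P) ^ 2 / a ^ 2 + (snd P) ^ 2 / b ^ 2 = 1.

Definition delta (a b : R) : R := sqrt (a ^ 4 - a ^ 2 * b ^ 2 + b ^ 4).

Definition nondegenerate (P1 P2 P3 : pt) : Prop :=
  cross (fst P2 - fst P1) (snd P2 - snd P1) (fst P3 - fst P1) (snd P3 - snd P1) <> 0.

(* The interior angle bisector at P (between rays P->Q and P->S) has direction
   (Q-P)/|Q-P| + (S-P)/|S-P|.  The normal line to E at P has direction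
   (x/a^2, y/b^2).  The normal bisects the interior angle at P iff these two
   directions are parallel (both lines pass through P). *)
Definition normal_bisects (a b : R) (P Q S : pt) : Prop :=
  let w1 := (fst Q - fst P) / dist P Q + (fst S - fst P) / dist P S in
  let w2 := (snd Q - snd P) / dist P Q + (snd S - snd P) / dist P S in
  cross (fst P / a ^ 2) (snd P / b ^ 2) w1 w2 = 0.

Definition three_periodic (a b : R) (P1 P2 P3 : pt) : Prop :=
  nondegenerate P1 P2 P3 /\
  on_ellipse a b P1 /\ on_ellipse a b P2 /\ on_ellipse a b P3 /\
  normal_bisects a b P1 P2 P3 /\
  normal_bisects a b P2 P3 P1 /\
  normal_bisects a b P3 P1 P2.

Definition trilinear_point (p q r : R) (P1 P2 P3 : pt) : pt :=
  let s1 := dist P2 P3 in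
  let s2 := dist P3 P1 in
  let s3 := dist P1 P2 in
  let w := p * s1 + q * s2 + r * s3 in
  ((p * s1 * fst P1 + q * s2 * fst P2 + r * s3 * fst P3) / w,
   (p * s1 * snd P1 + q * s2 * snd P2 + r * s3 * snd P3) / w).

Definition incenter (P1 P2 P3 : pt) : pt := trilinear_point 1 1 1 P1 P2 P3.

Definition is_excenter (X : pt) (P1 P2 P3 : pt) : Prop :=
  X = trilinear_point (-1) 1 1 P1 P2 P3 \/
  X = trilinear_point 1 (-1) 1 P1 P2 P3 \/
  X = trilinear_point 1 1 (-1) P1 P2 P3.

(* Main.v *)
Require Import Defs.
From Stdlib Require Import Reals Lra Lia Psatz.
Open Scope R_scope.

Definition ptc (a b s c : R) : pt := (a*(c^2-s^2), 2*b*s*c).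
Definition Dd (s1 c1 s2 c2 : R) : R := s1*c2 - s2*c1.
Definition Gp (a b d sx cx sy cy : R) : R :=
  (2*d-a^2-b^2)*(a^2*(sx*cy+sy*cx)^2 + b^2*(cx*cy-sx*sy)^2) - (a^2-b^2)^2*(sx*cy-sy*cx)^2.
Definition GL (a b L sx cx sy cy : R) : R :=
  L*a^2*(sx*cy+sy*cx)^2 + L*b^2*(cx*cy-sx*sy)^2 - a^2*b^2*(sx*cy-sy*cx)^2.
Definition Ac (a b d s c : R) : R := (2*d-a^2-b^2)*(a^2*c^2+b^2*s^2) - (a^2-b^2)^2*c^2.
Definition Bc (a b d s c : R) : R := 2*s*c*((a^2-b^2)*(2*d-a^2-b^2) + (a^2-b^2)^2).
Definition Cc (a b d s c : R) : R := (2*d-a^2-b^2)*(a^2*s^2+b^2*c^2) - (a^2-b^2)^2*s^2.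
Definition ALc (a b L s c : R) : R := L*(a^2*c^2+b^2*s^2) - a^2*b^2*c^2.
Definition BLc (a b L s c : R) : R := 2*s*c*(L*(a^2-b^2) + a^2*b^2).
Definition CLc (a b L s c : R) : R := L*(a^2*s^2+b^2*c^2) - a^2*b^2*s^2.
Definition Ff (a b d pc sg ps : R) : R :=
  (2*d-a^2-b^2)*(a^2*sg^2 + b^2*(pc-ps)^2) - (a^2-b^2)^2*(sg^2-4*ps*pc).
Definition FLf (a b L pc sg ps : R) : R :=
  L*a^2*sg^2 + L*b^2*(pc-ps)^2 - a^2*b^2*(sg^2-4*ps*pc).
Definition Fw (a b d s c : R) : R := (a^2-d)*s*(s^2-c^2) - 2*(d-b^2)*s*c^2.
Definition Hw (a b d s c : R) : R := -2*(d-b^2)*s^2*c - (a^2-d)*c*(s^2-c^2).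
Definition TIx (a b s1 c1 pc sg ps : R) : R := (2*s1^2*a*pc^2 + 6*s1^2*a*pc*ps - 2*s1^2*a*sg^2 - 2*s1*c1*a*pc*sg + 2*s1*c1*a*sg*ps - 6*c1^2*a*pc*ps + 2*c1^2*a*sg^2 - 2*c1^2*a*ps^2).
Definition TIy (a b s1 c1 pc sg ps : R) : R := (2*s1^2*b*pc*sg - 16*s1*c1*b*pc*ps + 2*s1*c1*b*sg^2 + 2*c1^2*b*sg*ps).
Definition TId (s1 c1 pc sg ps : R) : R := (2*s1^2*pc^2 - 6*s1^2*pc*ps + 2*s1^2*sg^2 - 2*s1*c1*pc*sg - 2*s1*c1*sg*ps - 6*c1^2*pc*ps + 2*c1^2*sg^2 + 2*c1^2*ps^2).
Definition TEx (a b s1 c1 pc sg ps : R) : R := (2*s1^2*a*pc^2 - 2*s1^2*a*pc*ps - 2*s1*c1*a*pc*sg + 2*s1*c1*a*sg*ps + 2*c1^2*a*pc*ps - 2*c1^2*a*ps^2).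
Definition TEy (a b s1 c1 pc sg ps : R) : R := (2*s1^2*b*pc*sg - 2*s1*c1*b*sg^2 + 2*c1^2*b*sg*ps).
Definition TEd (s1 c1 pc sg ps : R) : R := (2*s1^2*pc^2 + 2*s1^2*pc*ps - 2*s1*c1*pc*sg - 2*s1*c1*sg*ps + 2*c1^2*pc*ps + 2*c1^2*ps^2).

Lemma id_V1 (a b d s1 c1 s2 c2 : R) (u1 : s1^2+c1^2 = 1) (u2 : s2^2+c2^2 = 1) :
  (2*d-a^2-b^2)*((fst (ptc a b s1 c1) - fst (ptc a b s2 c2))^2 + (snd (ptc a b s1 c1) - snd (ptc a b s2 c2))^2) = 4*(a^2-b^2)^2*(Dd s1 c1 s2 c2)^4 + 4*(Dd s1 c1 s2 c2)^2*Gp a b d s1 c1 s2 c2.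
Proof.
  apply Rminus_diag_uniq.
  assert (Zc1 : (s1^2+c1^2-1) = 0) by lra.
  assert (Zc2 : (s2^2+c2^2-1) = 0) by lra.
  transitivity ((- 4*s1^2*s2^4*a^4 + 4*s1^2*s2^4*a^2*b^2 + 8*s1^2*s2^4*a^2*d + 8*s1^2*s2^4*b^4 - 16*s1^2*s2^4*b^2*d - 8*s1^2*s2^2*c2^2*a^4 + 8*s1^2*s2^2*c2^2*a^2*b^2 + 16*s1^2*s2^2*c2^2*a^2*d + 16*s1^2*s2^2*c2^2*b^4 - 32*s1^2*s2^2*c2^2*b^2*d - 4*s1^2*s2^2*a^2*b^2 - 4*s1^2*s2^2*b^4 + 8*s1^2*s2^2*b^2*d + 4*s1^2*c2^4*a^2*b^2 + 4*s1^2*c2^4*b^4 - 8*s1^2*c2^4*b^2*d + 3*s1^2*a^4 - s1^2*a^2*b^2 - 6*s1^2*a^2*d - 4*s1^2*b^4 + 8*s1^2*b^2*d - 8*s1*c1*s2^3*c2*a^2*b^2 - 8*s1*c1*s2^3*c2*b^4 + 16*s1*c1*s2^3*c2*b^2*d - 8*s1*c1*s2*c2^3*a^2*b^2 - 8*s1*c1*s2*c2^3*b^4 + 16*s1*c1*s2*c2^3*b^2*d + 4*c1^2*s2^4*a^4 + 4*c1^2*s2^4*a^2*b^2 - 8*c1^2*s2^4*a^2*d + 4*c1^2*s2^2*c2^2*a^2*b^2 + 4*c1^2*s2^2*c2^2*b^4 - 8*c1^2*s2^2*c2^2*b^2*d - c1^2*a^4 - c1^2*a^2*b^2 + 2*c1^2*a^2*d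 + 4*s2^4*a^4 - 8*s2^4*a^2*d - 4*s2^4*b^4 + 8*s2^4*b^2*d - 2*s2^2*a^4 + 2*s2^2*a^2*b^2 + 4*s2^2*a^2*d + 4*s2^2*b^4 - 8*s2^2*b^2*d + 2*c2^2*a^4 + 2*c2^2*a^2*b^2 - 4*c2^2*a^2*d - a^4 - a^2*b^2 + 2*a^2*d)*(s1^2+c1^2-1) + (4*s1^4*s2^2*a^4 - 4*s1^4*s2^2*a^2*b^2 - 8*s1^4*s2^2*a^2*d - 8*s1^4*s2^2*b^4 + 16*s1^4*s2^2*b^2*d + 4*s1^4*c2^2*a^4 - 8*s1^4*c2^2*a^2*d - 4*s1^4*c2^2*b^4 + 8*s1^4*c2^2*b^2*d + 4*s1^4*a^4 - 8*s1^4*a^2*d - 4*s1^4*b^4 + 8*s1^4*b^2*d - 4*s1^2*c1^2*s2^2*a^2*b^2 - 4*s1^2*c1^2*s2^2*b^4 + 8*s1^2*c1^2*s2^2*b^2*d - 8*s1^2*s2^2*a^4 + 4*s1^2*s2^2*a^2*b^2 + 16*s1^2*s2^2*a^2*d + 12*s1^2*s2^2*b^4 - 24*s1^2*s2^2*b^2*d + 4*s1^2*c2^2*a^2*b^2 + 4*s1^2*c2^2*b^4 - 8*s1^2*c2^2*b^2*d - 4*s1^2*a^4 + 8*s1^2*a^2*d + 4*s1^2*b^4 - 8*s1^2*b^2*d - 8*s1*c1*s2*c2*a^2*b^2 - 8*s1*c1*s2*c2*b^4 + 16*s1*c1*s2*c2*b^2*d + 4*c1^2*s2^2*a^2*b^2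 + 4*c1^2*s2^2*b^4 - 8*c1^2*s2^2*b^2*d + 3*s2^2*a^4 - s2^2*a^2*b^2 - 6*s2^2*a^2*d - 4*s2^2*b^4 + 8*s2^2*b^2*d - c2^2*a^4 - c2^2*a^2*b^2 + 2*c2^2*a^2*d + a^4 + a^2*b^2 - 2*a^2*d)*(s2^2+c2^2-1)).
  - unfold ptc, Dd, Gp; cbn [fst snd]; ring.
  - rewrite Zc1; rewrite Zc2; ring.
Qed.
Lemma id_V2 (a b s1 c1 s2 c2 : R) (u1 : s1^2+c1^2 = 1) (u2 : s2^2+c2^2 = 1) :
  (fst (ptc a b s1 c1) - fst (ptc a b s2 c2))^2*b^2 + (snd (ptc a b s1 c1) - snd (ptc a b s2 c2))^2*a^2 = 4*a^2*b^2*(Dd s1 c1 s2 c2)^2.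
Proof.
  apply Rminus_diag_uniq.
  assert (Zc1 : (s1^2+c1^2-1) = 0) by lra.
  assert (Zc2 : (s2^2+c2^2-1) = 0) by lra.
  transitivity ((s1^2*a^2*b^2 + c1^2*a^2*b^2 - 2*s2^2*a^2*b^2 - 2*c2^2*a^2*b^2 + a^2*b^2)*(s1^2+c1^2-1) + (s2^2*a^2*b^2 + c2^2*a^2*b^2 - a^2*b^2)*(s2^2+c2^2-1)).
  - unfold ptc, Dd; cbn [fst snd]; ring.
  - rewrite Zc1; rewrite Zc2; ring.
Qed.
Lemma id_V3 (a b s1 c1 s2 c2 s3 c3 : R) (u1 : s1^2+c1^2 = 1) (u2 : s2^2+c2^2 = 1) (u3 : s3^2+c3^2 = 1) :
  (fst (ptc a b s2 c2) - fst (ptc a b s1 c1))*(snd (ptc a b s3 c3) - snd (ptc a b s1 c1)) - (snd (ptc a b s2 c2) - snd (ptc a b s1 c1))*(fst (ptc a b s3 c3) - fst (ptc a b s1 c1)) = 4*a*b*Dd s1 c1 s2 c2*Dd s2 c2 s3 c3*Dd s3 c3 s1 c1.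
Proof.
  apply Rminus_diag_uniq.
  assert (Zc1 : (s1^2+c1^2-1) = 0) by lra.
  assert (Zc2 : (s2^2+c2^2-1) = 0) by lra.
  assert (Zc3 : (s3^2+c3^2-1) = 0) by lra.
  transitivity ((4*s2^2*s3*c3*a*b - 4*s2*c2*s3^2*a*b + 2*s2*c2*a*b - 2*s3*c3*a*b)*(s1^2+c1^2-1) + (- 4*s1^2*s3*c3*a*b + 4*s1*c1*s3^2*a*b - 2*s1*c1*a*b + 2*s3*c3*a*b)*(s2^2+c2^2-1) + (4*s1^2*s2*c2*a*b - 4*s1*c1*s2^2*a*b + 2*s1*c1*a*b - 2*s2*c2*a*b)*(s3^2+c3^2-1)).
  - unfold ptc, Dd; cbn [fst snd]; ring.
  - rewrite Zc1; rewrite Zc2; rewrite Zc3; ring.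
Qed.
Lemma id_V4 (a b L s1 c1 s2 c2 : R) (u1 : s1^2+c1^2 = 1) (u2 : s2^2+c2^2 = 1) :
  L*((fst (ptc a b s1 c1) - fst (ptc a b s2 c2))^2 + (snd (ptc a b s1 c1) - snd (ptc a b s2 c2))^2) = 4*a^2*b^2*(Dd s1 c1 s2 c2)^4 + 4*(Dd s1 c1 s2 c2)^2*GL a b L s1 c1 s2 c2.
Proof.
  apply Rminus_diag_uniq.
  assert (Zc1 : (s1^2+c1^2-1) = 0) by lra.
  assert (Zc2 : (s2^2+c2^2-1) = 0) by lra.
  transitivity ((4*s1^2*s2^4*a^2*L - 8*s1^2*s2^4*b^2*L + 8*s1^2*s2^2*c2^2*a^2*L - 16*s1^2*s2^2*c2^2*b^2*L + 4*s1^2*s2^2*b^2*L - 4*s1^2*c2^4*b^2*L - 3*s1^2*a^2*L + 4*s1^2*b^2*L + 8*s1*c1*s2^3*c2*b^2*L + 8*s1*c1*s2*c2^3*b^2*L - 4*c1^2*s2^4*a^2*L - 4*c1^2*s2^2*c2^2*b^2*L + c1^2*a^2*L - 4*s2^4*a^2*L + 4*s2^4*b^2*L + 2*s2^2*a^2*L - 4*s2^2*b^2*L - 2*c2^2*a^2*L + a^2*L)*(s1^2+c1^2-1) + (- 4*s1^4*s2^2*a^2*L + 8*s1^4*s2^2*b^2*L - 4*s1^4*c2^2*a^2*L + 4*s1^4*c2^2*b^2*L - 4*s1^4*a^2*L + 4*s1^4*b^2*L + 4*s1^2*c1^2*s2^2*b^2*L + 8*s1^2*s2^2*a^2*L - 12*s1^2*s2^2*b^2*L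 - 4*s1^2*c2^2*b^2*L + 4*s1^2*a^2*L - 4*s1^2*b^2*L + 8*s1*c1*s2*c2*b^2*L - 4*c1^2*s2^2*b^2*L - 3*s2^2*a^2*L + 4*s2^2*b^2*L + c2^2*a^2*L - a^2*L)*(s2^2+c2^2-1)).
  - unfold ptc, Dd, GL; cbn [fst snd]; ring.
  - rewrite Zc1; rewrite Zc2; ring.
Qed.
Lemma id_EF (a b d s1 c1 : R) (hd : d^2 = a^4 - a^2*b^2 + b^4) :
  Ff a b d (Ac a b d s1 c1) (- Bc a b d s1 c1) (Cc a b d s1 c1) = 0.
Proof.
  apply Rminus_diag_uniq.
  assert (Zd : (d^2 - (a^4 - a^2*b^2 + b^4)) = 0) by lra.
  transitivity ((- 4*s1^4*a^6*b^2 + 4*s1^4*a^4*b^4 + 8*s1^4*a^4*b^2*d + 4*s1^4*a^2*b^6 - 16*s1^4*a^2*b^4*d - 4*s1^4*b^8 + 8*s1^4*b^6*d - 16*s1^2*c1^2*a^8 + 24*s1^2*c1^2*a^6*b^2 + 32*s1^2*c1^2*a^6*d + 8*s1^2*c1^2*a^4*b^4 - 80*s1^2*c1^2*a^4*b^2*d - 24*s1^2*c1^2*a^2*b^6 + 64*s1^2*c1^2*a^2*b^4*d + 8*s1^2*c1^2*b^8 - 16*s1^2*c1^2*b^6*d - 4*c1^4*a^6*b^2 + 4*c1^4*a^4*b^4 + 8*c1^4*a^4*b^2*d + 4*c1^4*a^2*b^6 - 16*c1^4*a^2*b^4*d - 4*c1^4*b^8 + 8*c1^4*b^6*d)*(d^2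 - (a^4 - a^2*b^2 + b^4))).
  - unfold Ff, Ac, Bc, Cc; cbn [fst snd]; ring.
  - rewrite Zd; ring.
Qed.
Lemma id_EL (a b L s1 c1 : R)  :
  FLf a b L (ALc a b L s1 c1) (- BLc a b L s1 c1) (CLc a b L s1 c1) = L*(L^2*(a^2-b^2)^2+2*a^2*b^2*(a^2+b^2)*L-3*a^4*b^4)*(b^2*(s1^4+c1^4)+(4*a^2-2*b^2)*s1^2*c1^2).
Proof.
  apply Rminus_diag_uniq.
  transitivity (0).
  - unfold FLf, ALc, BLc, CLc; cbn [fst snd]; ring.
  - ring.
Qed.
Lemma id_AC (a b d s1 c1 : R) (hd : d^2 = a^4 - a^2*b^2 + b^4) (u1 : s1^2+c1^2 = 1) :
  Ac a b d s1 c1 + Cc a b d s1 c1 = 2*(a^2-d)*(d-b^2).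
Proof.
  apply Rminus_diag_uniq.
  assert (Zd : (d^2 - (a^4 - a^2*b^2 + b^4)) = 0) by lra.
  assert (Zc1 : (s1^2+c1^2-1) = 0) by lra.
  transitivity ((2)*(d^2 - (a^4 - a^2*b^2 + b^4)) + (- 2*a^4 + 2*a^2*d - 2*b^4 + 2*b^2*d)*(s1^2+c1^2-1)).
  - unfold Ac, Cc; cbn [fst snd]; ring.
  - rewrite Zd; rewrite Zc1; ring.
Qed.
Lemma id_DISC (a b d s1 c1 : R) (hd : d^2 = a^4 - a^2*b^2 + b^4) (u1 : s1^2+c1^2 = 1) :
  (Bc a b d s1 c1)^2 - 4*Ac a b d s1 c1*Cc a b d s1 c1 = (2*d-a^2-b^2)*(16*(a^2-b^2)^3*s1^2*c1^2+4*b^2*(a^2-d)^2).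
Proof.
  apply Rminus_diag_uniq.
  assert (Zd : (d^2 - (a^4 - a^2*b^2 + b^4)) = 0) by lra.
  assert (Zc1 : (s1^2+c1^2-1) = 0) by lra.
  transitivity ((- 16*s1^4*a^2*b^2 - 32*s1^2*c1^2*a^2*b^2 - 16*c1^4*a^2*b^2 + 20*a^2*b^2 + 4*b^4 - 8*b^2*d)*(d^2 - (a^4 - a^2*b^2 + b^4)) + (- 24*s1^2*a^6*b^2 + 12*s1^2*a^4*b^4 + 24*s1^2*a^4*b^2*d - 16*s1^2*a^2*b^6 - 4*s1^2*b^8 + 8*s1^2*b^6*d - 24*c1^2*a^6*b^2 + 12*c1^2*a^4*b^4 + 24*c1^2*a^4*b^2*d - 16*c1^2*a^2*b^6 - 4*c1^2*b^8 + 8*c1^2*b^6*d - 24*a^6*b^2 + 12*a^4*b^4 + 24*a^4*b^2*d - 16*a^2*b^6 - 4*b^8 + 8*b^6*d)*(s1^2+c1^2-1)).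
  - unfold Ac, Bc, Cc; cbn [fst snd]; ring.
  - rewrite Zd; rewrite Zc1; ring.
Qed.
Lemma id_PIx (a b d s1 c1 : R) (hd : d^2 = a^4 - a^2*b^2 + b^4) (u1 : s1^2+c1^2 = 1) :
  a*TIx a b s1 c1 (Ac a b d s1 c1) (- Bc a b d s1 c1) (Cc a b d s1 c1)*((Fw a b d s1 c1)^2 + (Hw a b d s1 c1)^2) = (d-b^2)*((Fw a b d s1 c1)^2 - (Hw a b d s1 c1)^2)*TId s1 c1 (Ac a b d s1 c1) (- Bc a b d s1 c1) (Cc a b d s1 c1).
Proof.
  apply Rminus_diag_uniq.
  assert (Zd : (d^2 - (a^4 - a^2*b^2 + b^4)) = 0) by lra.
  assert (Zc1 : (s1^2+c1^2-1) = 0) by lra.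
  transitivity ((- 16*s1^12*a^10 - 28*s1^12*a^8*b^2 + 32*s1^12*a^8*d + 248*s1^12*a^6*b^4 - 80*s1^12*a^6*b^2*d - 268*s1^12*a^4*b^6 + 136*s1^12*a^4*b^4*d - 60*s1^12*a^4*b^2*d^2 + 240*s1^12*a^2*b^8 - 104*s1^12*a^2*b^6*d + 8*s1^12*a^2*b^4*d^2 + 24*s1^12*a^2*b^2*d^3 + 4*s1^12*b^6*d^2 - 8*s1^12*b^4*d^3 - 64*s1^10*c1^2*a^10 - 180*s1^10*c1^2*a^8*b^2 + 128*s1^10*c1^2*a^8*d + 956*s1^10*c1^2*a^6*b^4 - 472*s1^10*c1^2*a^6*b^2*d + 16*s1^10*c1^2*a^6*d^2 - 1072*s1^10*c1^2*a^4*b^6 + 512*s1^10*c1^2*a^4*b^4*d + 32*s1^10*c1^2*a^4*b^2*d^2 - 32*s1^10*c1^2*a^4*d^3 + 732*s1^10*c1^2*a^2*b^8 - 128*s1^10*c1^2*a^2*b^6*d - 240*s1^10*c1^2*a^2*b^4*d^2 + 96*s1^10*c1^2*a^2*b^2*d^3 - 4*s1^10*c1^2*b^10 + 8*s1^10*c1^2*b^8*d + 16*s1^10*a^10 + 16*s1^10*a^8*b^2 - 32*s1^10*a^8*d - 256*s1^10*a^6*b^4 + 128*s1^10*a^6*b^2*d + 272*s1^10*a^4*b^6 - 128*s1^10*a^4*b^4*d - 240*s1^10*a^2*b^8 + 96*s1^10*a^2*b^6*d - 272*s1^8*c1^4*a^8*b^2 + 836*s1^8*c1^4*a^6*b^4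 - 136*s1^8*c1^4*a^6*b^2*d + 32*s1^8*c1^4*a^6*d^2 - 748*s1^8*c1^4*a^4*b^6 - 184*s1^8*c1^4*a^4*b^4*d + 244*s1^8*c1^4*a^4*b^2*d^2 - 64*s1^8*c1^4*a^4*d^3 + 300*s1^8*c1^4*a^2*b^8 + 568*s1^8*c1^4*a^2*b^6*d - 504*s1^8*c1^4*a^2*b^4*d^2 + 120*s1^8*c1^4*a^2*b^2*d^3 + 44*s1^8*c1^4*b^10 - 88*s1^8*c1^4*b^8*d - 12*s1^8*c1^4*b^6*d^2 + 24*s1^8*c1^4*b^4*d^3 + 32*s1^8*c1^2*a^10 + 212*s1^8*c1^2*a^8*b^2 - 64*s1^8*c1^2*a^8*d - 716*s1^8*c1^2*a^6*b^4 + 184*s1^8*c1^2*a^6*b^2*d + 736*s1^8*c1^2*a^4*b^6 - 160*s1^8*c1^2*a^4*b^4*d - 492*s1^8*c1^2*a^2*b^8 + 96*s1^8*c1^2*a^2*b^6*d - 12*s1^8*c1^2*b^10 + 24*s1^8*c1^2*b^8*d + 32*s1^6*c1^6*a^10 + 212*s1^6*c1^6*a^8*b^2 - 64*s1^6*c1^6*a^8*d - 716*s1^6*c1^6*a^6*b^4 + 184*s1^6*c1^6*a^6*b^2*d + 736*s1^6*c1^6*a^4*b^6 - 160*s1^6*c1^6*a^4*b^4*d - 492*s1^6*c1^6*a^2*b^8 + 96*s1^6*c1^6*a^2*b^6*d - 12*s1^6*c1^6*b^10 + 24*s1^6*c1^6*b^8*d + 16*s1^4*c1^8*a^10 + 288*s1^4*c1^8*a^8*b^2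 - 32*s1^4*c1^8*a^8*d - 1092*s1^4*c1^8*a^6*b^4 + 264*s1^4*c1^8*a^6*b^2*d - 32*s1^4*c1^8*a^6*d^2 + 1020*s1^4*c1^8*a^4*b^6 + 56*s1^4*c1^8*a^4*b^4*d - 244*s1^4*c1^8*a^4*b^2*d^2 + 64*s1^4*c1^8*a^4*d^3 - 540*s1^4*c1^8*a^2*b^8 - 472*s1^4*c1^8*a^2*b^6*d + 504*s1^4*c1^8*a^2*b^4*d^2 - 120*s1^4*c1^8*a^2*b^2*d^3 - 44*s1^4*c1^8*b^10 + 88*s1^4*c1^8*b^8*d + 12*s1^4*c1^8*b^6*d^2 - 24*s1^4*c1^8*b^4*d^3 - 32*s1^4*c1^6*a^10 - 212*s1^4*c1^6*a^8*b^2 + 64*s1^4*c1^6*a^8*d + 716*s1^4*c1^6*a^6*b^4 - 184*s1^4*c1^6*a^6*b^2*d - 736*s1^4*c1^6*a^4*b^6 + 160*s1^4*c1^6*a^4*b^4*d + 492*s1^4*c1^6*a^2*b^8 - 96*s1^4*c1^6*a^2*b^6*d + 12*s1^4*c1^6*b^10 - 24*s1^4*c1^6*b^8*d + 32*s1^2*c1^10*a^10 - 92*s1^2*c1^10*a^8*b^2 - 64*s1^2*c1^10*a^8*d - 172*s1^2*c1^10*a^6*b^4 + 312*s1^2*c1^10*a^6*b^2*d - 16*s1^2*c1^10*a^6*d^2 + 272*s1^2*c1^10*a^4*b^6 - 384*s1^2*c1^10*a^4*b^4*d - 32*s1^2*c1^10*a^4*b^2*d^2 + 32*s1^2*c1^10*a^4*d^3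 - 236*s1^2*c1^10*a^2*b^8 + 64*s1^2*c1^10*a^2*b^6*d + 240*s1^2*c1^10*a^2*b^4*d^2 - 96*s1^2*c1^10*a^2*b^2*d^3 + 20*s1^2*c1^10*b^10 - 40*s1^2*c1^10*b^8*d - 16*s1^2*c1^8*a^10 - 16*s1^2*c1^8*a^8*b^2 + 32*s1^2*c1^8*a^8*d + 256*s1^2*c1^8*a^6*b^4 - 128*s1^2*c1^8*a^6*b^2*d - 272*s1^2*c1^8*a^4*b^6 + 128*s1^2*c1^8*a^4*b^4*d + 240*s1^2*c1^8*a^2*b^8 - 96*s1^2*c1^8*a^2*b^6*d - 48*c1^12*a^8*b^2 + 76*c1^12*a^6*b^4 - 24*c1^12*a^6*b^2*d - 68*c1^12*a^4*b^6 - 40*c1^12*a^4*b^4*d + 60*c1^12*a^4*b^2*d^2 + 4*c1^12*a^2*b^8 + 40*c1^12*a^2*b^6*d - 8*c1^12*a^2*b^4*d^2 - 24*c1^12*a^2*b^2*d^3 + 4*c1^12*b^10 - 8*c1^12*b^8*d - 4*c1^12*b^6*d^2 + 8*c1^12*b^4*d^3 + 60*c1^10*a^8*b^2 - 68*c1^10*a^6*b^4 - 24*c1^10*a^6*b^2*d + 64*c1^10*a^4*b^6 + 32*c1^10*a^4*b^4*d - 4*c1^10*a^2*b^8 - 32*c1^10*a^2*b^6*d - 4*c1^10*b^10 + 8*c1^10*b^8*d)*(d^2 - (a^4 - a^2*b^2 + b^4)) + (- 16*s1^10*a^14 + 32*s1^10*a^12*d + 256*s1^10*a^10*b^4 - 160*s1^10*a^10*b^2*d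 + 16*s1^10*a^10*d^2 - 544*s1^10*a^8*b^6 + 288*s1^10*a^8*b^4*d + 16*s1^10*a^8*b^2*d^2 - 32*s1^10*a^8*d^3 + 768*s1^10*a^6*b^8 - 352*s1^10*a^6*b^6*d - 256*s1^10*a^6*b^4*d^2 + 128*s1^10*a^6*b^2*d^3 - 512*s1^10*a^4*b^10 + 224*s1^10*a^4*b^8*d + 272*s1^10*a^4*b^6*d^2 - 128*s1^10*a^4*b^4*d^3 + 240*s1^10*a^2*b^12 - 96*s1^10*a^2*b^10*d - 240*s1^10*a^2*b^8*d^2 + 96*s1^10*a^2*b^6*d^3 - 32*s1^8*c1^2*a^14 - 180*s1^8*c1^2*a^12*b^2 + 64*s1^8*c1^2*a^12*d + 896*s1^8*c1^2*a^10*b^4 - 248*s1^8*c1^2*a^10*b^2*d + 32*s1^8*c1^2*a^10*d^2 - 1664*s1^8*c1^2*a^8*b^6 + 408*s1^8*c1^2*a^8*b^4*d + 212*s1^8*c1^2*a^8*b^2*d^2 - 64*s1^8*c1^2*a^8*d^3 + 1944*s1^8*c1^2*a^6*b^8 - 440*s1^8*c1^2*a^6*b^6*d - 716*s1^8*c1^2*a^6*b^4*d^2 + 184*s1^8*c1^2*a^6*b^2*d^3 - 1216*s1^8*c1^2*a^4*b^10 + 232*s1^8*c1^2*a^4*b^8*d + 736*s1^8*c1^2*a^4*b^6*d^2 - 160*s1^8*c1^2*a^4*b^4*d^3 + 480*s1^8*c1^2*a^2*b^12 - 72*s1^8*c1^2*a^2*b^10*d - 492*s1^8*c1^2*a^2*b^8*d^2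 + 96*s1^8*c1^2*a^2*b^6*d^3 + 12*s1^8*c1^2*b^14 - 24*s1^8*c1^2*b^12*d - 12*s1^8*c1^2*b^10*d^2 + 24*s1^8*c1^2*b^8*d^3 + 32*s1^4*c1^6*a^14 + 180*s1^4*c1^6*a^12*b^2 - 64*s1^4*c1^6*a^12*d - 896*s1^4*c1^6*a^10*b^4 + 248*s1^4*c1^6*a^10*b^2*d - 32*s1^4*c1^6*a^10*d^2 + 1664*s1^4*c1^6*a^8*b^6 - 408*s1^4*c1^6*a^8*b^4*d - 212*s1^4*c1^6*a^8*b^2*d^2 + 64*s1^4*c1^6*a^8*d^3 - 1944*s1^4*c1^6*a^6*b^8 + 440*s1^4*c1^6*a^6*b^6*d + 716*s1^4*c1^6*a^6*b^4*d^2 - 184*s1^4*c1^6*a^6*b^2*d^3 + 1216*s1^4*c1^6*a^4*b^10 - 232*s1^4*c1^6*a^4*b^8*d - 736*s1^4*c1^6*a^4*b^6*d^2 + 160*s1^4*c1^6*a^4*b^4*d^3 - 480*s1^4*c1^6*a^2*b^12 + 72*s1^4*c1^6*a^2*b^10*d + 492*s1^4*c1^6*a^2*b^8*d^2 - 96*s1^4*c1^6*a^2*b^6*d^3 - 12*s1^4*c1^6*b^14 + 24*s1^4*c1^6*b^12*d + 12*s1^4*c1^6*b^10*d^2 - 24*s1^4*c1^6*b^8*d^3 + 16*s1^2*c1^8*a^14 - 32*s1^2*c1^8*a^12*d - 256*s1^2*c1^8*a^10*b^4 + 160*s1^2*c1^8*a^10*b^2*d - 16*s1^2*c1^8*a^10*d^2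 + 544*s1^2*c1^8*a^8*b^6 - 288*s1^2*c1^8*a^8*b^4*d - 16*s1^2*c1^8*a^8*b^2*d^2 + 32*s1^2*c1^8*a^8*d^3 - 768*s1^2*c1^8*a^6*b^8 + 352*s1^2*c1^8*a^6*b^6*d + 256*s1^2*c1^8*a^6*b^4*d^2 - 128*s1^2*c1^8*a^6*b^2*d^3 + 512*s1^2*c1^8*a^4*b^10 - 224*s1^2*c1^8*a^4*b^8*d - 272*s1^2*c1^8*a^4*b^6*d^2 + 128*s1^2*c1^8*a^4*b^4*d^3 - 240*s1^2*c1^8*a^2*b^12 + 96*s1^2*c1^8*a^2*b^10*d + 240*s1^2*c1^8*a^2*b^8*d^2 - 96*s1^2*c1^8*a^2*b^6*d^3 - 60*c1^10*a^12*b^2 + 128*c1^10*a^10*b^4 + 24*c1^10*a^10*b^2*d - 192*c1^10*a^8*b^6 - 56*c1^10*a^8*b^4*d + 60*c1^10*a^8*b^2*d^2 + 136*c1^10*a^6*b^8 + 88*c1^10*a^6*b^6*d - 68*c1^10*a^6*b^4*d^2 - 24*c1^10*a^6*b^2*d^3 - 64*c1^10*a^4*b^10 - 72*c1^10*a^4*b^8*d + 64*c1^10*a^4*b^6*d^2 + 32*c1^10*a^4*b^4*d^3 + 40*c1^10*a^2*b^10*d - 4*c1^10*a^2*b^8*d^2 - 32*c1^10*a^2*b^6*d^3 + 4*c1^10*b^14 - 8*c1^10*b^12*d - 4*c1^10*b^10*d^2 + 8*c1^10*b^8*d^3)*(s1^2+c1^2-1)).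
  - unfold Ac, Bc, Cc, Fw, Hw, TIx, TId; cbn [fst snd]; ring.
  - rewrite Zd; rewrite Zc1; ring.
Qed.
Lemma id_PIy (a b d s1 c1 : R) (hd : d^2 = a^4 - a^2*b^2 + b^4) (u1 : s1^2+c1^2 = 1) :
  b*TIy a b s1 c1 (Ac a b d s1 c1) (- Bc a b d s1 c1) (Cc a b d s1 c1)*((Fw a b d s1 c1)^2 + (Hw a b d s1 c1)^2) = (a^2-d)*(2*Fw a b d s1 c1*Hw a b d s1 c1)*TId s1 c1 (Ac a b d s1 c1) (- Bc a b d s1 c1) (Cc a b d s1 c1).
Proof.
  apply Rminus_diag_uniq.
  assert (Zd : (d^2 - (a^4 - a^2*b^2 + b^4)) = 0) by lra.
  assert (Zc1 : (s1^2+c1^2-1) = 0) by lra.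
  transitivity ((32*s1^11*c1*a^10 - 64*s1^11*c1*a^8*b^2 - 64*s1^11*c1*a^8*d - 360*s1^11*c1*a^6*b^4 + 208*s1^11*c1*a^6*b^2*d + 408*s1^11*c1*a^4*b^6 - 336*s1^11*c1*a^4*b^4*d + 120*s1^11*c1*a^4*b^2*d^2 - 472*s1^11*c1*a^2*b^8 + 272*s1^11*c1*a^2*b^6*d - 16*s1^11*c1*a^2*b^4*d^2 - 48*s1^11*c1*a^2*b^2*d^3 + 8*s1^11*c1*b^10 - 16*s1^11*c1*b^8*d - 8*s1^11*c1*b^6*d^2 + 16*s1^11*c1*b^4*d^3 + 160*s1^9*c1^3*a^10 + 176*s1^9*c1^3*a^8*b^2 - 320*s1^9*c1^3*a^8*d - 2136*s1^9*c1^3*a^6*b^4 + 1200*s1^9*c1^3*a^6*b^2*d - 32*s1^9*c1^3*a^6*d^2 + 2424*s1^9*c1^3*a^4*b^6 - 1424*s1^9*c1^3*a^4*b^4*d + 56*s1^9*c1^3*a^4*b^2*d^2 + 64*s1^9*c1^3*a^4*d^3 - 1928*s1^9*c1^3*a^2*b^8 + 592*s1^9*c1^3*a^2*b^6*d + 464*s1^9*c1^3*a^2*b^4*d^2 - 240*s1^9*c1^3*a^2*b^2*d^3 + 24*s1^9*c1^3*b^10 - 48*s1^9*c1^3*b^8*d - 8*s1^9*c1^3*b^6*d^2 + 16*s1^9*c1^3*b^4*d^3 - 32*s1^9*c1*a^10 + 88*s1^9*c1*a^8*b^2 + 64*s1^9*c1*a^8*d + 376*s1^9*c1*a^6*b^4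 - 304*s1^9*c1*a^6*b^2*d - 416*s1^9*c1*a^4*b^6 + 320*s1^9*c1*a^4*b^4*d + 472*s1^9*c1*a^2*b^8 - 256*s1^9*c1*a^2*b^6*d - 8*s1^9*c1*b^10 + 16*s1^9*c1*b^8*d + 160*s1^7*c1^5*a^10 + 720*s1^7*c1^5*a^8*b^2 - 320*s1^7*c1^5*a^8*d - 3808*s1^7*c1^5*a^6*b^4 + 1472*s1^7*c1^5*a^6*b^2*d - 96*s1^7*c1^5*a^6*d^2 + 3920*s1^7*c1^5*a^4*b^6 - 1056*s1^7*c1^5*a^4*b^4*d - 432*s1^7*c1^5*a^4*b^2*d^2 + 192*s1^7*c1^5*a^4*d^3 - 2528*s1^7*c1^5*a^2*b^8 - 544*s1^7*c1^5*a^2*b^6*d + 1472*s1^7*c1^5*a^2*b^4*d^2 - 480*s1^7*c1^5*a^2*b^2*d^3 - 64*s1^7*c1^5*b^10 + 128*s1^7*c1^5*b^8*d + 16*s1^7*c1^5*b^6*d^2 - 32*s1^7*c1^5*b^4*d^3 - 96*s1^7*c1^3*a^10 - 336*s1^7*c1^3*a^8*b^2 + 192*s1^7*c1^3*a^8*d + 1808*s1^7*c1^3*a^6*b^4 - 672*s1^7*c1^3*a^6*b^2*d - 1888*s1^7*c1^3*a^4*b^6 + 640*s1^7*c1^3*a^4*b^4*d + 1456*s1^7*c1^3*a^2*b^8 - 448*s1^7*c1^3*a^2*b^6*d + 16*s1^7*c1^3*b^10 - 32*s1^7*c1^3*b^8*d + 96*s1^5*c1^7*a^10 + 296*s1^5*c1^7*a^8*b^2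 - 192*s1^5*c1^7*a^8*d - 2376*s1^5*c1^7*a^6*b^4 + 1104*s1^5*c1^7*a^6*b^2*d - 96*s1^5*c1^7*a^6*d^2 + 2448*s1^5*c1^7*a^4*b^6 - 736*s1^5*c1^7*a^4*b^4*d - 432*s1^5*c1^7*a^4*b^2*d^2 + 192*s1^5*c1^7*a^4*d^3 - 1544*s1^5*c1^7*a^2*b^8 - 736*s1^5*c1^7*a^2*b^6*d + 1472*s1^5*c1^7*a^2*b^4*d^2 - 480*s1^5*c1^7*a^2*b^2*d^3 - 40*s1^5*c1^7*b^10 + 80*s1^5*c1^7*b^8*d + 16*s1^5*c1^7*b^6*d^2 - 32*s1^5*c1^7*b^4*d^3 - 96*s1^5*c1^5*a^10 - 336*s1^5*c1^5*a^8*b^2 + 192*s1^5*c1^5*a^8*d + 1808*s1^5*c1^5*a^6*b^4 - 672*s1^5*c1^5*a^6*b^2*d - 1888*s1^5*c1^5*a^4*b^6 + 640*s1^5*c1^5*a^4*b^4*d + 1456*s1^5*c1^5*a^2*b^8 - 448*s1^5*c1^5*a^2*b^6*d + 16*s1^5*c1^5*b^10 - 32*s1^5*c1^5*b^8*d + 64*s1^3*c1^9*a^10 - 280*s1^3*c1^9*a^8*b^2 - 128*s1^3*c1^9*a^8*d - 192*s1^3*c1^9*a^6*b^4 + 576*s1^3*c1^9*a^6*b^2*d - 32*s1^3*c1^9*a^6*d^2 + 408*s1^3*c1^9*a^4*b^6 - 848*s1^3*c1^9*a^4*b^4*d + 56*s1^3*c1^9*a^4*b^2*d^2 + 64*s1^3*c1^9*a^4*d^3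 - 464*s1^3*c1^9*a^2*b^8 + 208*s1^3*c1^9*a^2*b^6*d + 464*s1^3*c1^9*a^2*b^4*d^2 - 240*s1^3*c1^9*a^2*b^2*d^3 + 48*s1^3*c1^9*b^10 - 96*s1^3*c1^9*b^8*d - 8*s1^3*c1^9*b^6*d^2 + 16*s1^3*c1^9*b^4*d^3 - 32*s1^3*c1^7*a^10 + 88*s1^3*c1^7*a^8*b^2 + 64*s1^3*c1^7*a^8*d + 376*s1^3*c1^7*a^6*b^4 - 304*s1^3*c1^7*a^6*b^2*d - 416*s1^3*c1^7*a^4*b^6 + 320*s1^3*c1^7*a^4*b^4*d + 472*s1^3*c1^7*a^2*b^8 - 256*s1^3*c1^7*a^2*b^6*d - 8*s1^3*c1^7*b^10 + 16*s1^3*c1^7*b^8*d - 96*s1*c1^11*a^8*b^2 + 152*s1*c1^11*a^6*b^4 - 48*s1*c1^11*a^6*b^2*d - 136*s1*c1^11*a^4*b^6 - 80*s1*c1^11*a^4*b^4*d + 120*s1*c1^11*a^4*b^2*d^2 + 8*s1*c1^11*a^2*b^8 + 80*s1*c1^11*a^2*b^6*d - 16*s1*c1^11*a^2*b^4*d^2 - 48*s1*c1^11*a^2*b^2*d^3 + 8*s1*c1^11*b^10 - 16*s1*c1^11*b^8*d - 8*s1*c1^11*b^6*d^2 + 16*s1*c1^11*b^4*d^3 + 120*s1*c1^9*a^8*b^2 - 136*s1*c1^9*a^6*b^4 - 48*s1*c1^9*a^6*b^2*d + 128*s1*c1^9*a^4*b^6 + 64*s1*c1^9*a^4*b^4*d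 - 8*s1*c1^9*a^2*b^8 - 64*s1*c1^9*a^2*b^6*d - 8*s1*c1^9*b^10 + 16*s1*c1^9*b^8*d)*(d^2 - (a^4 - a^2*b^2 + b^4)) + (32*s1^9*c1*a^14 - 120*s1^9*c1*a^12*b^2 - 64*s1^9*c1*a^12*d - 256*s1^9*c1*a^10*b^4 + 368*s1^9*c1*a^10*b^2*d - 32*s1^9*c1*a^10*d^2 + 704*s1^9*c1*a^8*b^6 - 688*s1^9*c1*a^8*b^4*d + 88*s1^9*c1*a^8*b^2*d^2 + 64*s1^9*c1*a^8*d^3 - 1264*s1^9*c1*a^6*b^8 + 880*s1^9*c1*a^6*b^6*d + 376*s1^9*c1*a^6*b^4*d^2 - 304*s1^9*c1*a^6*b^2*d^3 + 896*s1^9*c1*a^4*b^10 - 592*s1^9*c1*a^4*b^8*d - 416*s1^9*c1*a^4*b^6*d^2 + 320*s1^9*c1*a^4*b^4*d^3 - 480*s1^9*c1*a^2*b^12 + 272*s1^9*c1*a^2*b^10*d + 472*s1^9*c1*a^2*b^8*d^2 - 256*s1^9*c1*a^2*b^6*d^3 + 8*s1^9*c1*b^14 - 16*s1^9*c1*b^12*d - 8*s1^9*c1*b^10*d^2 + 16*s1^9*c1*b^8*d^3 + 96*s1^7*c1^3*a^14 + 240*s1^7*c1^3*a^12*b^2 - 192*s1^7*c1^3*a^12*d - 2048*s1^7*c1^3*a^10*b^4 + 864*s1^7*c1^3*a^10*b^2*d - 96*s1^7*c1^3*a^10*d^2 + 4032*s1^7*c1^3*a^8*b^6 - 1504*s1^7*c1^3*a^8*b^4*d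 - 336*s1^7*c1^3*a^8*b^2*d^2 + 192*s1^7*c1^3*a^8*d^3 - 5152*s1^7*c1^3*a^6*b^8 + 1760*s1^7*c1^3*a^6*b^6*d + 1808*s1^7*c1^3*a^6*b^4*d^2 - 672*s1^7*c1^3*a^6*b^2*d^3 + 3328*s1^7*c1^3*a^4*b^10 - 1056*s1^7*c1^3*a^4*b^8*d - 1888*s1^7*c1^3*a^4*b^6*d^2 + 640*s1^7*c1^3*a^4*b^4*d^3 - 1440*s1^7*c1^3*a^2*b^12 + 416*s1^7*c1^3*a^2*b^10*d + 1456*s1^7*c1^3*a^2*b^8*d^2 - 448*s1^7*c1^3*a^2*b^6*d^3 - 16*s1^7*c1^3*b^14 + 32*s1^7*c1^3*b^12*d + 16*s1^7*c1^3*b^10*d^2 - 32*s1^7*c1^3*b^8*d^3 + 96*s1^5*c1^5*a^14 + 240*s1^5*c1^5*a^12*b^2 - 192*s1^5*c1^5*a^12*d - 2048*s1^5*c1^5*a^10*b^4 + 864*s1^5*c1^5*a^10*b^2*d - 96*s1^5*c1^5*a^10*d^2 + 4032*s1^5*c1^5*a^8*b^6 - 1504*s1^5*c1^5*a^8*b^4*d - 336*s1^5*c1^5*a^8*b^2*d^2 + 192*s1^5*c1^5*a^8*d^3 - 5152*s1^5*c1^5*a^6*b^8 + 1760*s1^5*c1^5*a^6*b^6*d + 1808*s1^5*c1^5*a^6*b^4*d^2 - 672*s1^5*c1^5*a^6*b^2*d^3 + 3328*s1^5*c1^5*a^4*b^10 - 1056*s1^5*c1^5*a^4*b^8*d - 1888*s1^5*c1^5*a^4*b^6*d^2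 + 640*s1^5*c1^5*a^4*b^4*d^3 - 1440*s1^5*c1^5*a^2*b^12 + 416*s1^5*c1^5*a^2*b^10*d + 1456*s1^5*c1^5*a^2*b^8*d^2 - 448*s1^5*c1^5*a^2*b^6*d^3 - 16*s1^5*c1^5*b^14 + 32*s1^5*c1^5*b^12*d + 16*s1^5*c1^5*b^10*d^2 - 32*s1^5*c1^5*b^8*d^3 + 32*s1^3*c1^7*a^14 - 120*s1^3*c1^7*a^12*b^2 - 64*s1^3*c1^7*a^12*d - 256*s1^3*c1^7*a^10*b^4 + 368*s1^3*c1^7*a^10*b^2*d - 32*s1^3*c1^7*a^10*d^2 + 704*s1^3*c1^7*a^8*b^6 - 688*s1^3*c1^7*a^8*b^4*d + 88*s1^3*c1^7*a^8*b^2*d^2 + 64*s1^3*c1^7*a^8*d^3 - 1264*s1^3*c1^7*a^6*b^8 + 880*s1^3*c1^7*a^6*b^6*d + 376*s1^3*c1^7*a^6*b^4*d^2 - 304*s1^3*c1^7*a^6*b^2*d^3 + 896*s1^3*c1^7*a^4*b^10 - 592*s1^3*c1^7*a^4*b^8*d - 416*s1^3*c1^7*a^4*b^6*d^2 + 320*s1^3*c1^7*a^4*b^4*d^3 - 480*s1^3*c1^7*a^2*b^12 + 272*s1^3*c1^7*a^2*b^10*d + 472*s1^3*c1^7*a^2*b^8*d^2 - 256*s1^3*c1^7*a^2*b^6*d^3 + 8*s1^3*c1^7*b^14 - 16*s1^3*c1^7*b^12*d - 8*s1^3*c1^7*b^10*d^2 + 16*s1^3*c1^7*b^8*d^3 -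 120*s1*c1^9*a^12*b^2 + 256*s1*c1^9*a^10*b^4 + 48*s1*c1^9*a^10*b^2*d - 384*s1*c1^9*a^8*b^6 - 112*s1*c1^9*a^8*b^4*d + 120*s1*c1^9*a^8*b^2*d^2 + 272*s1*c1^9*a^6*b^8 + 176*s1*c1^9*a^6*b^6*d - 136*s1*c1^9*a^6*b^4*d^2 - 48*s1*c1^9*a^6*b^2*d^3 - 128*s1*c1^9*a^4*b^10 - 144*s1*c1^9*a^4*b^8*d + 128*s1*c1^9*a^4*b^6*d^2 + 64*s1*c1^9*a^4*b^4*d^3 + 80*s1*c1^9*a^2*b^10*d - 8*s1*c1^9*a^2*b^8*d^2 - 64*s1*c1^9*a^2*b^6*d^3 + 8*s1*c1^9*b^14 - 16*s1*c1^9*b^12*d - 8*s1*c1^9*b^10*d^2 + 16*s1*c1^9*b^8*d^3)*(s1^2+c1^2-1)).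
  - unfold Ac, Bc, Cc, Fw, Hw, TIy, TId; cbn [fst snd]; ring.
  - rewrite Zd; rewrite Zc1; ring.
Qed.
Lemma id_PEx (a b d s1 c1 : R) (hd : d^2 = a^4 - a^2*b^2 + b^4) (u1 : s1^2+c1^2 = 1) :
  a^2*TEx a b s1 c1 (Ac a b d s1 c1) (- Bc a b d s1 c1) (Cc a b d s1 c1) = -((b^2+d)*fst (ptc a b s1 c1)*TEd s1 c1 (Ac a b d s1 c1) (- Bc a b d s1 c1) (Cc a b d s1 c1)).
Proof.
  apply Rminus_diag_uniq.
  assert (Zd : (d^2 - (a^4 - a^2*b^2 + b^4)) = 0) by lra.
  assert (Zc1 : (s1^2+c1^2-1) = 0) by lra.
  transitivity ((12*s1^8*a^5*b^2 - 8*s1^8*a^3*b^2*d + 4*s1^8*a*b^6 - 8*s1^8*a*b^4*d + 48*s1^6*c1^2*a^7 - 24*s1^6*c1^2*a^5*b^2 - 32*s1^6*c1^2*a^5*d + 16*s1^6*c1^2*a^3*b^4 - 16*s1^6*c1^2*a^3*b^2*d - 8*s1^6*c1^2*a*b^6 + 16*s1^6*c1^2*a*b^4*d - 8*s1^6*a^5*b^2 + 8*s1^6*a^3*b^4 - 32*s1^4*c1^2*a^7 + 56*s1^4*c1^2*a^5*b^2 - 24*s1^4*c1^2*a^3*b^4 - 48*s1^2*c1^6*a^7 + 24*s1^2*c1^6*a^5*b^2 + 32*s1^2*c1^6*a^5*d - 16*s1^2*c1^6*a^3*b^4 + 16*s1^2*c1^6*a^3*b^2*d + 8*s1^2*c1^6*a*b^6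 - 16*s1^2*c1^6*a*b^4*d + 32*s1^2*c1^4*a^7 - 56*s1^2*c1^4*a^5*b^2 + 24*s1^2*c1^4*a^3*b^4 - 12*c1^8*a^5*b^2 + 8*c1^8*a^3*b^2*d - 4*c1^8*a*b^6 + 8*c1^8*a*b^4*d + 8*c1^6*a^5*b^2 - 8*c1^6*a^3*b^4)*(d^2 - (a^4 - a^2*b^2 + b^4)) + (12*s1^6*a^9*b^2 - 16*s1^6*a^7*b^4 - 12*s1^6*a^7*b^2*d + 12*s1^6*a^5*b^6 + 8*s1^6*a^5*b^4*d - 8*s1^6*a^3*b^8 + 4*s1^6*a^3*b^6*d + 48*s1^4*c1^2*a^11 - 100*s1^4*c1^2*a^9*b^2 - 48*s1^4*c1^2*a^9*d + 96*s1^4*c1^2*a^7*b^4 + 68*s1^4*c1^2*a^7*b^2*d - 68*s1^4*c1^2*a^5*b^6 - 8*s1^4*c1^2*a^5*b^4*d + 24*s1^4*c1^2*a^3*b^8 - 12*s1^4*c1^2*a^3*b^6*d - 48*s1^2*c1^4*a^11 + 100*s1^2*c1^4*a^9*b^2 + 48*s1^2*c1^4*a^9*d - 96*s1^2*c1^4*a^7*b^4 - 68*s1^2*c1^4*a^7*b^2*d + 68*s1^2*c1^4*a^5*b^6 + 8*s1^2*c1^4*a^5*b^4*d - 24*s1^2*c1^4*a^3*b^8 + 12*s1^2*c1^4*a^3*b^6*d - 12*c1^6*a^9*b^2 + 16*c1^6*a^7*b^4 + 12*c1^6*a^7*b^2*d - 12*c1^6*a^5*b^6 - 8*c1^6*a^5*b^4*d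 + 8*c1^6*a^3*b^8 - 4*c1^6*a^3*b^6*d)*(s1^2+c1^2-1)).
  - unfold Ac, Bc, Cc, Fw, Hw, TEx, TEd, ptc; cbn [fst snd]; ring.
  - rewrite Zd; rewrite Zc1; ring.
Qed.
Lemma id_PEy (a b d s1 c1 : R) (hd : d^2 = a^4 - a^2*b^2 + b^4) (u1 : s1^2+c1^2 = 1) :
  b^2*TEy a b s1 c1 (Ac a b d s1 c1) (- Bc a b d s1 c1) (Cc a b d s1 c1) = -((a^2+d)*snd (ptc a b s1 c1)*TEd s1 c1 (Ac a b d s1 c1) (- Bc a b d s1 c1) (Cc a b d s1 c1)).
Proof.
  apply Rminus_diag_uniq.
  assert (Zd : (d^2 - (a^4 - a^2*b^2 + b^4)) = 0) by lra.
  assert (Zc1 : (s1^2+c1^2-1) = 0) by lra.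
  transitivity ((- 8*s1^7*c1*a^4*b^3 + 16*s1^7*c1*a^2*b^3*d - 24*s1^7*c1*b^7 + 16*s1^7*c1*b^5*d - 32*s1^5*c1^3*a^6*b + 8*s1^5*c1^3*a^4*b^3 + 64*s1^5*c1^3*a^4*b*d - 96*s1^5*c1^3*a^2*b^5 + 48*s1^5*c1^3*a^2*b^3*d + 24*s1^5*c1^3*b^7 - 16*s1^5*c1^3*b^5*d - 16*s1^5*c1*a^2*b^5 + 16*s1^5*c1*b^7 - 32*s1^3*c1^5*a^6*b + 8*s1^3*c1^5*a^4*b^3 + 64*s1^3*c1^5*a^4*b*d - 96*s1^3*c1^5*a^2*b^5 + 48*s1^3*c1^5*a^2*b^3*d + 24*s1^3*c1^5*b^7 - 16*s1^3*c1^5*b^5*d - 64*s1^3*c1^3*a^4*b^3 + 96*s1^3*c1^3*a^2*b^5 - 32*s1^3*c1^3*b^7 - 8*s1*c1^7*a^4*b^3 + 16*s1*c1^7*a^2*b^3*d - 24*s1*c1^7*b^7 + 16*s1*c1^7*b^5*d - 16*s1*c1^5*a^2*b^5 + 16*s1*c1^5*b^7)*(d^2 - (a^4 - a^2*b^2 + b^4)) + (16*s1^5*c1*a^6*b^5 - 24*s1^5*c1*a^4*b^7 - 8*s1^5*c1*a^4*b^5*d + 32*s1^5*c1*a^2*b^9 - 16*s1^5*c1*a^2*b^7*d - 24*s1^5*c1*b^11 + 24*s1^5*c1*b^9*d + 64*s1^3*c1^3*a^8*b^3 - 128*s1^3*c1^3*a^6*b^5 - 32*s1^3*c1^3*a^6*b^3*d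 + 176*s1^3*c1^3*a^4*b^7 - 48*s1^3*c1^3*a^4*b^5*d - 160*s1^3*c1^3*a^2*b^9 + 128*s1^3*c1^3*a^2*b^7*d + 48*s1^3*c1^3*b^11 - 48*s1^3*c1^3*b^9*d + 16*s1*c1^5*a^6*b^5 - 24*s1*c1^5*a^4*b^7 - 8*s1*c1^5*a^4*b^5*d + 32*s1*c1^5*a^2*b^9 - 16*s1*c1^5*a^2*b^7*d - 24*s1*c1^5*b^11 + 24*s1*c1^5*b^9*d)*(s1^2+c1^2-1)).
  - unfold Ac, Bc, Cc, Fw, Hw, TEy, TEd, ptc; cbn [fst snd]; ring.
  - rewrite Zd; rewrite Zc1; ring.
Qed.

Lemma Gp_sym a b d sx cx sy cy : Gp a b d sx cx sy cy = Gp a b d sy cy sx cx.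
Proof. unfold Gp; ring. Qed.

Lemma Gp_quad a b d s1 c1 y z :
  Gp a b d s1 c1 y z = Ac a b d s1 c1 * y^2 + Bc a b d s1 c1 * y*z + Cc a b d s1 c1 * z^2.
Proof. unfold Gp, Ac, Bc, Cc; ring. Qed.

Lemma GL_quad a b L s1 c1 y z :
  GL a b L s1 c1 y z = ALc a b L s1 c1 * y^2 + BLc a b L s1 c1 * y*z + CLc a b L s1 c1 * z^2.
Proof. unfold GL, ALc, BLc, CLc; ring. Qed.

Lemma Gp_F a b d s2 c2 s3 c3 : Gp a b d s2 c2 s3 c3 = Ff a b d (c2*c3) (s2*c3+s3*c2) (s2*s3).
Proof. unfold Gp, Ff; ring. Qed.

Lemma GL_F a b L s2 c2 s3 c3 : GL a b L s2 c2 s3 c3 = FLf a b L (c2*c3) (s2*c3+s3*c2) (s2*s3).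
Proof. unfold GL, FLf; ring. Qed.

Lemma Ff_hom a b d k x y z : Ff a b d (k*x) (k*y) (k*z) = k^2 * Ff a b d x y z.
Proof. unfold Ff; ring. Qed.

Lemma FLf_hom a b L k x y z : FLf a b L (k*x) (k*y) (k*z) = k^2 * FLf a b L x y z.
Proof. unfold FLf; ring. Qed.

Lemma par3 (x1 x2 x3 n1 n2 n3 : R) : x1^2+x2^2+x3^2 <> 0 ->
  x2*n3 - x3*n2 = 0 -> x3*n1 - x1*n3 = 0 -> x1*n2 - x2*n1 = 0 ->
  exists k, n1 = k*x1 /\ n2 = k*x2 /\ n3 = k*x3.
Proof.
  intros hN h1 h2 h3.
  set (N := x1^2+x2^2+x3^2) in *.
  set (S := n1*x1+n2*x2+n3*x3).
  exists (S/N).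
  assert (E1 : n1*N = S*x1).
  { assert (Z : n1*N - S*x1 = -x2*(x1*n2 - x2*n1) + x3*(x3*n1 - x1*n3)) by (unfold N, S; ring).
    rewrite h3, h2 in Z. lra. }
  assert (E2 : n2*N = S*x2).
  { assert (Z : n2*N - S*x2 = x1*(x1*n2 - x2*n1) - x3*(x2*n3 - x3*n2)) by (unfold N, S; ring).
    rewrite h3, h1 in Z. lra. }
  assert (E3 : n3*N = S*x3).
  { assert (Z : n3*N - S*x3 = -x1*(x3*n1 - x1*n3) + x2*(x2*n3 - x3*n2)) by (unfold N, S; ring).
    rewrite h2, h1 in Z. lra. }
  split; [|split].
  - apply (Rmult_eq_reg_r N); [|exact hN].
    replace (S / N * x1 * N) with (S*x1) by (field; exact hN). exact E1.
  - apply (Rmult_eq_reg_r N); [|exact hN].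
    replace (S / N * x2 * N) with (S*x2) by (field; exact hN). exact E2.
  - apply (Rmult_eq_reg_r N); [|exact hN].
    replace (S / N * x3 * N) with (S*x3) by (field; exact hN). exact E3.
Qed.

Lemma closure_par (A B C s2 c2 s3 c3 : R) :
  A*s2^2 + B*s2*c2 + C*c2^2 = 0 -> A*s3^2+B*s3*c3+C*c3^2 = 0 -> Dd s2 c2 s3 c3 <> 0 ->
  A^2 + (-B)^2 + C^2 <> 0 ->
  exists k, c2*c3 = k*A /\ s2*c3+s3*c2 = k*(-B) /\ s2*s3 = k*C.
Proof.
  intros h2 h3 hD hX.
  unfold Dd in hD.
  assert (e1 : (-B)*(s2*s3) - C*(s2*c3+s3*c2) = 0).
  { apply (Rmult_eq_reg_l (s2*c3-s3*c2)); [|exact hD].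
    transitivity (s3^2*(A*s2^2 + B*s2*c2 + C*c2^2) - s2^2*(A*s3^2+B*s3*c3+C*c3^2)); [ring|].
    rewrite h2, h3; ring. }
  assert (e2 : C*(c2*c3) - A*(s2*s3) = 0).
  { apply (Rmult_eq_reg_l (s2*c3-s3*c2)); [|exact hD].
    transitivity (s2*c2*(A*s3^2+B*s3*c3+C*c3^2) - s3*c3*(A*s2^2 + B*s2*c2 + C*c2^2)); [ring|].
    rewrite h2, h3; ring. }
  assert (e3 : A*(s2*c3+s3*c2) - (-B)*(c2*c3) = 0).
  { apply (Rmult_eq_reg_l (s2*c3-s3*c2)); [|exact hD].
    transitivity (c3^2*(A*s2^2 + B*s2*c2 + C*c2^2) - c2^2*(A*s3^2+B*s3*c3+C*c3^2)); [ring|].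
    rewrite h2, h3; ring. }
  exact (par3 A (-B) C (c2*c3) (s2*c3+s3*c2) (s2*s3) hX e1 e2 e3).
Qed.

Lemma sq_eq0 x : x^2 = 0 -> x = 0.
Proof. intros h. destruct (Req_dec x 0) as [e|e]; auto. exfalso; apply (pow_nonzero x 2); auto. Qed.

Lemma sq0 x y z : x^2 + y^2 + z^2 = 0 -> x = 0 /\ y = 0 /\ z = 0.
Proof.
  intros h. pose proof (pow2_ge_0 x). pose proof (pow2_ge_0 y). pose proof (pow2_ge_0 z).
  split; [|split]; apply sq_eq0; lra.
Qed.

Lemma n_nonzero s2 c2 s3 c3 : Dd s2 c2 s3 c3 <> 0 ->
  (c2*c3)^2 + (s2*c3+s3*c2)^2 + (s2*s3)^2 <> 0.
Proof.
  intros hD h. apply hD. unfold Dd.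
  destruct (sq0 _ _ _ h) as [h1 [h2 h3]].
  assert (Z : (s2*c3-s3*c2)^2 = (s2*c3+s3*c2)^2 - 4*(s2*s3)*(c2*c3)) by ring.
  rewrite h1, h2, h3 in Z. apply sq_eq0. lra.
Qed.


Definition Hyp (a b d : R) := 0 < b /\ b < a /\ 0 < d /\ d^2 = a^4 - a^2*b^2 + b^4.

Lemma hyp_facts a b d : Hyp a b d ->
  0 < a^2 - d /\ 0 < d - b^2 /\ 0 < 2*d - a^2 - b^2 /\ 0 < a^2 - b^2 /\ 0 < a.
Proof.
  intros [hb [hab [hd0 hd]]].
  assert (ha : 0 < a) by lra.
  assert (hab2 : 0 < a^2 - b^2).
  { assert (0 < a - b) by lra. assert (0 < a+b) by lra.
    replace (a^2-b^2) with ((a-b)*(a+b)) by ring. apply Rmult_lt_0_compat; lra. }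
  assert (hb2 : 0 < b^2) by (apply pow_lt; lra).
  assert (ha2 : 0 < a^2) by (apply pow_lt; lra).
  assert (h1 : 0 < a^2 - d).
  { assert (E : (a^2)^2 - d^2 = b^2*(a^2-b^2)) by (rewrite hd; ring).
    assert (0 < (a^2-d)*(a^2+d)) by (replace ((a^2-d)*(a^2+d)) with ((a^2)^2-d^2) by ring; rewrite E; apply Rmult_lt_0_compat; lra).
    destruct (Rle_or_lt (a^2-d) 0); [|lra]. assert (0 < a^2+d) by lra. nra. }
  assert (h2 : 0 < d - b^2).
  { assert (E : d^2 - (b^2)^2 = a^2*(a^2-b^2)) by (rewrite hd; ring).
    assert (0 < (d-b^2)*(d+b^2)) by (replace ((d-b^2)*(d+b^2)) with (d^2-(b^2)^2) by ring; rewrite E; apply Rmult_lt_0_compat; lra).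
    destruct (Rle_or_lt (d-b^2) 0); [|lra]. assert (0 < d+b^2) by lra. nra. }
  assert (h3 : 0 < 2*d - a^2 - b^2).
  { assert (E : (2*d)^2 - (a^2+b^2)^2 = 3*(a^2-b^2)^2) by (replace ((2*d)^2) with (4*d^2) by ring; rewrite hd; ring).
    assert (0 < (a^2-b^2)^2) by (apply pow_lt; lra).
    assert (0 < (2*d-(a^2+b^2))*(2*d+(a^2+b^2))) by (replace ((2*d-(a^2+b^2))*(2*d+(a^2+b^2))) with ((2*d)^2-(a^2+b^2)^2) by ring; lra).
    destruct (Rle_or_lt (2*d-a^2-b^2) 0); [|lra]. assert (0 < 2*d+(a^2+b^2)) by lra. nra. }
  tauto.
Qed.

Lemma sq_inj x y : 0 <= x -> 0 <= y -> x^2 = y^2 -> x = y.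
Proof. intros hx hy h. nra. Qed.

Lemma Gp_self_pos a b d s c : Hyp a b d -> s^2+c^2 = 1 -> 0 < Gp a b d s c s c.
Proof.
  intros H u. destruct (hyp_facts _ _ _ H) as [h1 [h2 [h3 [h4 h5]]]].
  destruct H as [hb [hab [hd0 hd]]].
  unfold Gp.
  replace (s*c-s*c) with 0 by ring.
  assert (E : (2*s*c)^2 + (c^2-s^2)^2 = 1) by (transitivity ((s^2+c^2)^2); [ring| rewrite u; ring]).
  assert (0 < a^2*(s*c+s*c)^2 + b^2*(c*c-s*s)^2).
  { assert (b^2 <= a^2) by nra.
    assert (0 < b^2) by nra.
    replace (s*c+s*c) with (2*s*c) by ring. replace (c*c-s*s) with (c^2-s^2) by ring.
    pose proof (pow2_ge_0 (2*s*c)). nra. }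
  replace ((a^2-b^2)^2*0^2) with 0 by ring. nra.
Qed.

Lemma D_of_Gp a b d s1 c1 s2 c2 : Hyp a b d -> s1^2+c1^2 = 1 -> s2^2+c2^2=1 ->
  Gp a b d s1 c1 s2 c2 = 0 -> Dd s1 c1 s2 c2 <> 0.
Proof.
  intros H u1 u2 hG hD. unfold Dd in hD.
  set (e := s1*s2 + c1*c2).
  assert (es : s2 = e*s1).
  { assert (Z : s2 - e*s1 = s2*(1 - (s1^2+c1^2)) - c1*(s1*c2-s2*c1)) by (unfold e; ring).
    rewrite u1, hD in Z. lra. }
  assert (ec : c2 = e*c1).
  { assert (Z : c2 - e*c1 = c2*(1 - (s1^2+c1^2)) + s1*(s1*c2-s2*c1)) by (unfold e; ring).
    rewrite u1, hD in Z. lra. }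
  assert (e2 : e^2 = 1).
  { assert (Z : s2^2+c2^2 = e^2*(s1^2+c1^2)) by (rewrite es, ec; ring). rewrite u1, u2 in Z. lra. }
  assert (Z : Gp a b d s1 c1 s2 c2 = e^2 * Gp a b d s1 c1 s1 c1) by (rewrite es, ec; unfold Gp; ring).
  rewrite e2, hG in Z. pose proof (Gp_self_pos a b d s1 c1 H u1). lra.
Qed.

Definition K0 (a b d : R) := 2*(a^2-b^2)/sqrt(2*d-a^2-b^2).

Lemma K0_pos a b d : Hyp a b d -> 0 < K0 a b d.
Proof.
  intros H. destruct (hyp_facts _ _ _ H) as [h1 [h2 [h3 [h4 h5]]]].
  unfold K0. apply Rdiv_lt_0_compat; [lra|]. apply sqrt_lt_R0; lra.
Qed.

Lemma dist_ptc a b d s1 c1 s2 c2 : Hyp a b d -> s1^2+c1^2 = 1 -> s2^2+c2^2=1 ->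
  Gp a b d s1 c1 s2 c2 = 0 -> Defs.dist (ptc a b s1 c1) (ptc a b s2 c2) = K0 a b d * (Dd s1 c1 s2 c2)^2.
Proof.
  intros H u1 u2 hG.
  destruct (hyp_facts _ _ _ H) as [h1 [h2 [h3 [h4 h5]]]].
  pose proof (id_V1 a b d s1 c1 s2 c2 u1 u2) as V. rewrite hG in V.
  pose proof (K0_pos a b d H) as hK.
  unfold Defs.dist.
  set (v := (fst (ptc a b s1 c1) - fst (ptc a b s2 c2)) ^ 2 + (snd (ptc a b s1 c1) - snd (ptc a b s2 c2)) ^ 2) in *.
  assert (hs : sqrt (2*d-a^2-b^2) ^2 = 2*d-a^2-b^2) by (apply pow2_sqrt; lra).
  assert (hs0 : 0 < sqrt (2*d-a^2-b^2)) by (apply sqrt_lt_R0; lra).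
  assert (Ev : v = (K0 a b d * (Dd s1 c1 s2 c2)^2)^2).
  { unfold K0. field_simplify; [|lra]. rewrite hs.
    apply (Rmult_eq_reg_l (2*d-a^2-b^2)); [|lra]. field_simplify; [|lra]. nra. }
  rewrite Ev. apply sqrt_pow2. pose proof (pow2_ge_0 (Dd s1 c1 s2 c2)). nra.
Qed.


Definition Tri a b d s1 c1 s2 c2 s3 c3 :=
  s1^2+c1^2=1 /\ s2^2+c2^2=1 /\ s3^2+c3^2=1 /\
  Gp a b d s1 c1 s2 c2 = 0 /\ Gp a b d s1 c1 s3 c3 = 0 /\ Gp a b d s2 c2 s3 c3 = 0.

Lemma Tri_rot a b d s1 c1 s2 c2 s3 c3 : Tri a b d s1 c1 s2 c2 s3 c3 -> Tri a b d s2 c2 s3 c3 s1 c1.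
Proof.
  intros [u1 [u2 [u3 [g12 [g13 g23]]]]]. repeat split; auto.
  rewrite Gp_sym; auto. rewrite Gp_sym; auto.
Qed.

Lemma X_nonzero a b d s1 c1 : Hyp a b d -> s1^2+c1^2=1 ->
  (Ac a b d s1 c1)^2 + (- Bc a b d s1 c1)^2 + (Cc a b d s1 c1)^2 <> 0.
Proof.
  intros H u1 h.
  destruct (hyp_facts _ _ _ H) as [h1 [h2 [h3 [h4 h5]]]].
  destruct (sq0 _ _ _ h) as [e1 [e2 e3]].
  pose proof (id_AC a b d s1 c1 (proj2 (proj2 (proj2 H))) u1) as E.
  rewrite e1, e3 in E. assert (0 < (a^2-d)*(d-b^2)) by (apply Rmult_lt_0_compat; lra). lra.
Qed.

Lemma Tri_kappa a b d s1 c1 s2 c2 s3 c3 : Hyp a b d -> Tri a b d s1 c1 s2 c2 s3 c3 ->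
  exists k, k <> 0 /\ c2*c3 = k*Ac a b d s1 c1 /\ s2*c3+s3*c2 = k*(- Bc a b d s1 c1) /\ s2*s3 = k*Cc a b d s1 c1.
Proof.
  intros H [u1 [u2 [u3 [g12 [g13 g23]]]]].
  pose proof (D_of_Gp _ _ _ _ _ _ _ H u2 u3 g23) as hD.
  rewrite Gp_quad in g12, g13.
  destruct (closure_par _ _ _ s2 c2 s3 c3 g12 g13 hD (X_nonzero _ _ _ _ _ H u1)) as [k [k1 [k2 k3]]].
  exists k. split; auto.
  intro k0. apply (n_nonzero _ _ _ _ hD). rewrite k1, k2, k3, k0. ring.
Qed.

Lemma tri_complete a b d s1 c1 s2 c2 s3 c3 : Hyp a b d ->
  s1^2+c1^2=1 -> s2^2+c2^2=1 -> s3^2+c3^2=1 ->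
  Gp a b d s1 c1 s2 c2 = 0 -> Gp a b d s1 c1 s3 c3 = 0 -> Dd s2 c2 s3 c3 <> 0 ->
  Tri a b d s1 c1 s2 c2 s3 c3.
Proof.
  intros H u1 u2 u3 g12 g13 hD.
  repeat split; auto.
  pose proof g12 as g12'. pose proof g13 as g13'.
  rewrite Gp_quad in g12', g13'.
  destruct (closure_par _ _ _ s2 c2 s3 c3 g12' g13' hD (X_nonzero _ _ _ _ _ H u1)) as [k [k1 [k2 k3]]].
  rewrite Gp_F, k1, k2, k3, Ff_hom, (id_EF a b d s1 c1 (proj2 (proj2 (proj2 H)))). ring.
Qed.

Lemma div_eq (n1 n2 d1 d2 : R) : n1 = n2 -> d1 = d2 -> n1/d1 = n2/d2.
Proof. intros; subst; auto. Qed.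

Lemma trilin_formula a b d s1 c1 s2 c2 s3 c3 p q r : Hyp a b d -> Tri a b d s1 c1 s2 c2 s3 c3 ->
  p*(Dd s2 c2 s3 c3)^2 + q*(Dd s3 c3 s1 c1)^2 + r*(Dd s1 c1 s2 c2)^2 <> 0 ->
  trilinear_point p q r (ptc a b s1 c1) (ptc a b s2 c2) (ptc a b s3 c3) =
  ((p*(Dd s2 c2 s3 c3)^2*fst (ptc a b s1 c1) + q*(Dd s3 c3 s1 c1)^2*fst (ptc a b s2 c2) + r*(Dd s1 c1 s2 c2)^2*fst (ptc a b s3 c3))
     / (p*(Dd s2 c2 s3 c3)^2 + q*(Dd s3 c3 s1 c1)^2 + r*(Dd s1 c1 s2 c2)^2),
   (p*(Dd s2 c2 s3 c3)^2*snd (ptc a b s1 c1) + q*(Dd s3 c3 s1 c1)^2*snd (ptc a b s2 c2) + r*(Dd s1 c1 s2 c2)^2*snd (ptc a b s3 c3))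
     / (p*(Dd s2 c2 s3 c3)^2 + q*(Dd s3 c3 s1 c1)^2 + r*(Dd s1 c1 s2 c2)^2)).
Proof.
  intros H T hden.
  destruct T as [u1 [u2 [u3 [g12 [g13 g23]]]]].
  assert (g31 : Gp a b d s3 c3 s1 c1 = 0) by (rewrite Gp_sym; auto).
  unfold trilinear_point.
  rewrite (dist_ptc _ _ _ _ _ _ _ H u2 u3 g23), (dist_ptc _ _ _ _ _ _ _ H u3 u1 g31),
          (dist_ptc _ _ _ _ _ _ _ H u1 u2 g12).
  pose proof (K0_pos a b d H).
  assert (hd2 : p * (K0 a b d * Dd s2 c2 s3 c3 ^ 2) + q * (K0 a b d * Dd s3 c3 s1 c1 ^ 2) +
    r * (K0 a b d * Dd s1 c1 s2 c2 ^ 2) <> 0).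
  { replace (p * (K0 a b d * Dd s2 c2 s3 c3 ^ 2) + q * (K0 a b d * Dd s3 c3 s1 c1 ^ 2) +
    r * (K0 a b d * Dd s1 c1 s2 c2 ^ 2)) with (K0 a b d * (p*(Dd s2 c2 s3 c3)^2 + q*(Dd s3 c3 s1 c1)^2 + r*(Dd s1 c1 s2 c2)^2)) by ring.
    apply Rmult_integral_contrapositive_currified; lra. }
  f_equal; field; repeat split; try lra; auto.
Qed.


Lemma sq_pos x : x <> 0 -> 0 < x^2.
Proof. intros h. pose proof (pow2_ge_0 x). destruct (Req_dec (x^2) 0) as [e|e]; [apply sq_eq0 in e; contradiction|lra]. Qed.

Lemma W1_pos a b d s c : Hyp a b d -> s^2+c^2 = 1 -> 0 < (Fw a b d s c)^2 + (Hw a b d s c)^2.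
Proof.
  intros H u.
  destruct (hyp_facts _ _ _ H) as [h1 [h2 [h3 [h4 h5]]]].
  assert (E : (Fw a b d s c)^2 + (Hw a b d s c)^2 =
     (s^2+c^2)*((a^2-d)^2*(s^2-c^2)^2 + 4*(d-b^2)^2*s^2*c^2)) by (unfold Fw, Hw; ring).
  rewrite E, u.
  assert (E2 : (s^2-c^2)^2 + 4*s^2*c^2 = 1) by (transitivity ((s^2+c^2)^2); [ring|rewrite u; ring]).
  assert (hb2 : (a^2-d)^2 <= (d-b^2)^2).
  { assert (0 <= (d-b^2) - (a^2-d)) by lra. nra. }
  assert (0 < (a^2-d)^2) by (apply pow_lt; lra).
  assert (0 <= s^2*c^2) by (replace (s^2*c^2) with ((s*c)^2) by ring; apply pow2_ge_0).
  assert (0 <= (s^2-c^2)^2) by apply pow2_ge_0.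
  nra.
Qed.

Lemma Dall a b d s1 c1 s2 c2 s3 c3 : Hyp a b d -> Tri a b d s1 c1 s2 c2 s3 c3 ->
  Dd s2 c2 s3 c3 <> 0 /\ Dd s3 c3 s1 c1 <> 0 /\ Dd s1 c1 s2 c2 <> 0.
Proof.
  intros H [u1 [u2 [u3 [g12 [g13 g23]]]]].
  assert (g31 : Gp a b d s3 c3 s1 c1 = 0) by (rewrite Gp_sym; auto).
  split; [|split]; eapply D_of_Gp; eauto.
Qed.

Lemma incenter_formula a b d s1 c1 s2 c2 s3 c3 : Hyp a b d -> Tri a b d s1 c1 s2 c2 s3 c3 ->
  incenter (ptc a b s1 c1) (ptc a b s2 c2) (ptc a b s3 c3) =
  ((d-b^2)/a * (((Fw a b d s1 c1)^2 - (Hw a b d s1 c1)^2) / ((Fw a b d s1 c1)^2 + (Hw a b d s1 c1)^2)),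
   (a^2-d)/b * ((2*Fw a b d s1 c1*Hw a b d s1 c1) / ((Fw a b d s1 c1)^2 + (Hw a b d s1 c1)^2))).
Proof.
  intros H T.
  destruct (hyp_facts _ _ _ H) as [h1 [h2 [h3 [h4 h5]]]].
  pose proof H as H'. destruct H' as [hb [hab [hd0 hd]]].
  destruct (Dall _ _ _ _ _ _ _ _ _ H T) as [D1 [D2 D3]].
  pose proof T as T'. destruct T' as [u1 [u2 [u3 [g12 [g13 g23]]]]].
  destruct (Tri_kappa _ _ _ _ _ _ _ _ _ H T) as [k [k0 [k1 [k2 k3]]]].
  assert (hden : 1*(Dd s2 c2 s3 c3)^2 + 1*(Dd s3 c3 s1 c1)^2 + 1*(Dd s1 c1 s2 c2)^2 <> 0).
  { assert (0 < (Dd s2 c2 s3 c3)^2) by (apply sq_pos; auto).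
    pose proof (pow2_ge_0 (Dd s3 c3 s1 c1)). pose proof (pow2_ge_0 (Dd s1 c1 s2 c2)). lra. }
  unfold incenter. rewrite (trilin_formula _ _ _ _ _ _ _ _ _ _ _ _ H T hden).
  set (A := Ac a b d s1 c1) in *. set (B := - Bc a b d s1 c1) in *. set (C := Cc a b d s1 c1) in *.
  assert (Ex : 1*(Dd s2 c2 s3 c3)^2*fst (ptc a b s1 c1) + 1*(Dd s3 c3 s1 c1)^2*fst (ptc a b s2 c2) + 1*(Dd s1 c1 s2 c2)^2*fst (ptc a b s3 c3)
              = k^2 * TIx a b s1 c1 A B C).
  { transitivity (TIx a b s1 c1 (c2*c3) (s2*c3+s3*c2) (s2*s3)); [unfold TIx, Dd, ptc; cbn [fst snd]; ring|].
    rewrite k1, k2, k3. unfold TIx. ring. }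
  assert (Ey : 1*(Dd s2 c2 s3 c3)^2*snd (ptc a b s1 c1) + 1*(Dd s3 c3 s1 c1)^2*snd (ptc a b s2 c2) + 1*(Dd s1 c1 s2 c2)^2*snd (ptc a b s3 c3)
              = k^2 * TIy a b s1 c1 A B C).
  { transitivity (TIy a b s1 c1 (c2*c3) (s2*c3+s3*c2) (s2*s3)); [unfold TIy, Dd, ptc; cbn [fst snd]; ring|].
    rewrite k1, k2, k3. unfold TIy; ring. }
  assert (Ed : 1*(Dd s2 c2 s3 c3)^2 + 1*(Dd s3 c3 s1 c1)^2 + 1*(Dd s1 c1 s2 c2)^2 = k^2 * TId s1 c1 A B C).
  { transitivity ((Dd s2 c2 s3 c3)^2*(s1^2+c1^2) + (Dd s3 c3 s1 c1)^2*(s2^2+c2^2) + (Dd s1 c1 s2 c2)^2*(s3^2+c3^2)).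
    { rewrite u1, u2, u3; ring. }
    transitivity (TId s1 c1 (c2*c3) (s2*c3+s3*c2) (s2*s3)); [unfold TId, Dd; ring|].
    rewrite k1, k2, k3. unfold TId; ring. }
  rewrite Ex, Ey, Ed.
  assert (hT : TId s1 c1 A B C <> 0).
  { intro z. apply hden. rewrite Ed, z. ring. }
  pose proof (W1_pos a b d s1 c1 H u1) as hW.
  pose proof (id_PIx a b d s1 c1 hd u1) as PX. fold A B C in PX.
  pose proof (id_PIy a b d s1 c1 hd u1) as PY. fold A B C in PY.
  assert (k2n : k^2 <> 0) by (apply pow_nonzero; auto).
  set (W1 := (Fw a b d s1 c1)^2 + (Hw a b d s1 c1)^2) in *.
  assert (IX : TIx a b s1 c1 A B C = (d-b^2)*((Fw a b d s1 c1)^2 - (Hw a b d s1 c1)^2)*TId s1 c1 A B C/(a*W1)).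
  { rewrite <- PX. field. split; lra. }
  assert (IY : TIy a b s1 c1 A B C = (a^2-d)*(2*Fw a b d s1 c1*Hw a b d s1 c1)*TId s1 c1 A B C/(b*W1)).
  { rewrite <- PY. field. split; lra. }
  rewrite IX, IY. f_equal; field; repeat split; auto; lra.
Qed.

Lemma excenter1_formula a b d s1 c1 s2 c2 s3 c3 : Hyp a b d -> Tri a b d s1 c1 s2 c2 s3 c3 ->
  trilinear_point (-1) 1 1 (ptc a b s1 c1) (ptc a b s2 c2) (ptc a b s3 c3) =
  (-((b^2+d)/a^2) * fst (ptc a b s1 c1), -((a^2+d)/b^2) * snd (ptc a b s1 c1)).
Proof.
  intros H T.
  destruct (hyp_facts _ _ _ H) as [h1 [h2 [h3 [h4 h5]]]].
  pose proof H as H'. destruct H' as [hb [hab [hd0 hd]]].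
  pose proof T as T'. destruct T' as [u1 [u2 [u3 [g12 [g13 g23]]]]].
  destruct (Tri_kappa _ _ _ _ _ _ _ _ _ H T) as [k [k0 [k1 [k2 k3]]]].
  pose proof (id_AC a b d s1 c1 hd u1) as hAC.
  pose proof (Gp_self_pos a b d s1 c1 H u1) as hGs.
  rewrite Gp_quad in hGs.
  set (A := Ac a b d s1 c1) in *. set (B := - Bc a b d s1 c1) in *. set (C := Cc a b d s1 c1) in *.
  assert (TEpos : 0 < TEd s1 c1 A B C).
  { replace (TEd s1 c1 A B C) with ((2*(A+C))*(A * s1 ^ 2 + Bc a b d s1 c1 * s1 * c1 + C * c1 ^ 2))
      by (unfold TEd, A, B, C; ring).
    rewrite hAC. assert (0 < (a^2-d)*(d-b^2)) by (apply Rmult_lt_0_compat; lra).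
    apply Rmult_lt_0_compat; [|exact hGs]. lra. }
  assert (Ed : -1*(Dd s2 c2 s3 c3)^2 + 1*(Dd s3 c3 s1 c1)^2 + 1*(Dd s1 c1 s2 c2)^2 = k^2 * TEd s1 c1 A B C).
  { transitivity (-(Dd s2 c2 s3 c3)^2*(s1^2+c1^2) + (Dd s3 c3 s1 c1)^2*(s2^2+c2^2) + (Dd s1 c1 s2 c2)^2*(s3^2+c3^2)).
    { rewrite u1, u2, u3; ring. }
    transitivity (TEd s1 c1 (c2*c3) (s2*c3+s3*c2) (s2*s3)); [unfold TEd, Dd; ring|].
    rewrite k1, k2, k3. unfold TEd; ring. }
  assert (k2n : 0 < k^2) by (apply sq_pos; auto).
  assert (hden : -1*(Dd s2 c2 s3 c3)^2 + 1*(Dd s3 c3 s1 c1)^2 + 1*(Dd s1 c1 s2 c2)^2 <> 0).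
  { rewrite Ed. apply Rgt_not_eq. apply Rmult_lt_0_compat; lra. }
  rewrite (trilin_formula _ _ _ _ _ _ _ _ _ _ _ _ H T hden).
  assert (Ex : -1*(Dd s2 c2 s3 c3)^2*fst (ptc a b s1 c1) + 1*(Dd s3 c3 s1 c1)^2*fst (ptc a b s2 c2) + 1*(Dd s1 c1 s2 c2)^2*fst (ptc a b s3 c3)
              = k^2 * TEx a b s1 c1 A B C).
  { transitivity (TEx a b s1 c1 (c2*c3) (s2*c3+s3*c2) (s2*s3)); [unfold TEx, Dd, ptc; cbn [fst snd]; ring|].
    rewrite k1, k2, k3. unfold TEx; ring. }
  assert (Ey : -1*(Dd s2 c2 s3 c3)^2*snd (ptc a b s1 c1) + 1*(Dd s3 c3 s1 c1)^2*snd (ptc a b s2 c2) + 1*(Dd s1 c1 s2 c2)^2*snd (ptc a b s3 c3)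
              = k^2 * TEy a b s1 c1 A B C).
  { transitivity (TEy a b s1 c1 (c2*c3) (s2*c3+s3*c2) (s2*s3)); [unfold TEy, Dd, ptc; cbn [fst snd]; ring|].
    rewrite k1, k2, k3. unfold TEy; ring. }
  rewrite Ex, Ey, Ed.
  pose proof (id_PEx a b d s1 c1 hd u1) as PX. fold A B C in PX.
  pose proof (id_PEy a b d s1 c1 hd u1) as PY. fold A B C in PY.
  assert (IX : TEx a b s1 c1 A B C = -((b^2+d)*fst (ptc a b s1 c1)*TEd s1 c1 A B C)/a^2).
  { rewrite <- PX. field. lra. }
  assert (IY : TEy a b s1 c1 A B C = -((a^2+d)*snd (ptc a b s1 c1)*TEd s1 c1 A B C)/b^2).
  { rewrite <- PY. field. lra. }
  rewrite IX, IY. f_equal; field; repeat split; lra.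
Qed.


Lemma sqrt_sq_pos x : 0 < x -> 0 < sqrt x /\ (sqrt x)^2 = x.
Proof. intros h. split; [apply sqrt_lt_R0; auto| apply pow2_sqrt; lra]. Qed.

Lemma bis_vec (n1 n2 ux uy vx vy d2 d3 : R) :
  n1^2 + n2^2 <> 0 -> 0 < d2 -> 0 < d3 -> d2^2 = ux^2+uy^2 -> d3^2 = vx^2+vy^2 ->
  ux*vy - uy*vx <> 0 ->
  (n1*ux + n2*uy)/d2 = (n1*vx + n2*vy)/d3 ->
  n1*(uy/d2 + vy/d3) - n2*(ux/d2 + vx/d3) = 0.
Proof.
  intros hn h2 h3 e2 e3 hc hdot.
  set (ex := ux/d2) in *. set (ey := uy/d2) in *. set (fx := vx/d3) in *. set (fy := vy/d3) in *.
  assert (ue : ex^2+ey^2 = 1) by (unfold ex, ey; field_simplify; [rewrite <- e2; field|]; lra).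
  assert (uf : fx^2+fy^2 = 1) by (unfold fx, fy; field_simplify; [rewrite <- e3; field|]; lra).
  assert (dt : n1*ex + n2*ey = n1*fx + n2*fy).
  { replace (n1*ex + n2*ey) with ((n1*ux + n2*uy)/d2) by (unfold ex, ey; field; lra).
    replace (n1*fx + n2*fy) with ((n1*vx + n2*vy)/d3) by (unfold fx, fy; field; lra). exact hdot. }
  assert (L2 : (n1*ex+n2*ey)^2 + (n1*ey - n2*ex)^2 = (n1^2+n2^2)*(ex^2+ey^2)) by ring.
  assert (L3 : (n1*fx+n2*fy)^2 + (n1*fy - n2*fx)^2 = (n1^2+n2^2)*(fx^2+fy^2)) by ring.
  rewrite ue in L2. rewrite uf in L3. rewrite dt in L2.
  assert (F : ((n1*ey - n2*ex) - (n1*fy - n2*fx))*((n1*ey - n2*ex) + (n1*fy - n2*fx)) = 0).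
  { transitivity ((n1*ey - n2*ex)^2 - (n1*fy - n2*fx)^2); [ring|lra]. }
  destruct (Rmult_integral _ _ F) as [F1|F2].
  - exfalso. apply hc.
    assert (tx : ex = fx /\ ey = fy).
    { assert (Z : (n1^2+n2^2)*((ex-fx)^2+(ey-fy)^2) = (n1*(ex-fx)+n2*(ey-fy))^2 + (n1*(ey-fy) - n2*(ex-fx))^2) by ring.
      assert (Z1 : n1*(ex-fx)+n2*(ey-fy) = 0) by lra.
      assert (Z2 : n1*(ey-fy) - n2*(ex-fx) = 0) by lra.
      rewrite Z1, Z2 in Z.
      assert (Z3 : (ex-fx)^2+(ey-fy)^2 = 0).
      { apply (Rmult_eq_reg_l (n1^2+n2^2)); auto. rewrite Z. ring. }
      destruct (sq0 (ex-fx) (ey-fy) 0) as [q1 [q2 _]]; [lra|]. lra. }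
    destruct tx as [tx ty].
    replace ux with (d2*ex) by (unfold ex; field; lra).
    replace uy with (d2*ey) by (unfold ey; field; lra).
    replace vx with (d3*fx) by (unfold fx; field; lra).
    replace vy with (d3*fy) by (unfold fy; field; lra).
    rewrite tx, ty. ring.
  - lra.
Qed.

Lemma eq_vec (n1 n2 ux uy vx vy d2 d3 : R) :
  0 < d2 -> 0 < d3 -> d2^2 = ux^2+uy^2 -> d3^2 = vx^2+vy^2 ->
  ux*vy - uy*vx <> 0 ->
  n1*(uy/d2 + vy/d3) - n2*(ux/d2 + vx/d3) = 0 ->
  (n1*ux + n2*uy)/d2 = (n1*vx + n2*vy)/d3.
Proof.
  intros h2 h3 e2 e3 hc hb.
  set (ex := ux/d2) in *. set (ey := uy/d2) in *. set (fx := vx/d3) in *. set (fy := vy/d3) in *.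
  assert (ue : ex^2+ey^2 = 1) by (unfold ex, ey; field_simplify; [rewrite <- e2; field|]; lra).
  assert (uf : fx^2+fy^2 = 1) by (unfold fx, fy; field_simplify; [rewrite <- e3; field|]; lra).
  replace ((n1*ux + n2*uy)/d2) with (n1*ex+n2*ey) by (unfold ex, ey; field; lra).
  replace ((n1*vx + n2*vy)/d3) with (n1*fx+n2*fy) by (unfold fx, fy; field; lra).
  set (sx := ex+fx). set (sy := ey+fy). set (tx := ex-fx). set (ty := ey-fy).
  assert (st : sx*tx + sy*ty = 0) by (unfold sx, sy, tx, ty; lra).
  assert (I : (n1*tx+n2*ty)*(sx^2+sy^2) = (n1*sx+n2*sy)*(sx*tx+sy*ty) + (sx*n2 - sy*n1)*(sx*ty - sy*tx)) by ring.
  assert (cs : sx*n2 - sy*n1 = 0) by (unfold sx, sy; lra).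
  rewrite st, cs in I.
  assert (hs : sx^2+sy^2 <> 0).
  { intro z. apply hc.
    destruct (sq0 sx sy 0) as [q1 [q2 _]]; [lra|].
    replace ux with (d2*ex) by (unfold ex; field; lra).
    replace uy with (d2*ey) by (unfold ey; field; lra).
    replace vx with (d3*fx) by (unfold fx; field; lra).
    replace vy with (d3*fy) by (unfold fy; field; lra).
    replace fx with (-ex) by (unfold sx in q1; lra). replace fy with (-ey) by (unfold sy in q2; lra). ring. }
  assert (n1*tx+n2*ty = 0).
  { apply (Rmult_eq_reg_r (sx^2+sy^2)); auto. rewrite I. ring. }
  unfold tx, ty in *. lra.
Qed.


Lemma id_DOT (s1 c1 s2 c2 : R) (u1 : s1^2+c1^2 = 1) (u2 : s2^2+c2^2 = 1) :
  (c1^2-s1^2)*((c2^2-s2^2)-(c1^2-s1^2)) + (2*s1*c1)*(2*s2*c2-2*s1*c1) = -2*(s1*c2-s2*c1)^2.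
Proof.
  apply Rminus_diag_uniq.
  assert (Zc1 : (s1^2+c1^2-1) = 0) by lra.
  assert (Zc2 : (s2^2+c2^2-1) = 0) by lra.
  transitivity ((- s1^2 - c1^2 + s2^2 + c2^2 - 1)*(s1^2+c1^2-1) + (1)*(s2^2+c2^2-1)).
  - ring.
  - rewrite Zc1; rewrite Zc2; ring.
Qed.

Lemma dot_ratio a b d s1 c1 s2 c2 : Hyp a b d -> s1^2+c1^2=1 -> s2^2+c2^2=1 ->
  Gp a b d s1 c1 s2 c2 = 0 ->
  (fst (ptc a b s1 c1)/a^2 * (fst (ptc a b s2 c2) - fst (ptc a b s1 c1)) +
   snd (ptc a b s1 c1)/b^2 * (snd (ptc a b s2 c2) - snd (ptc a b s1 c1))) / Defs.dist (ptc a b s1 c1) (ptc a b s2 c2)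
  = -2 / K0 a b d.
Proof.
  intros H u1 u2 g.
  destruct (hyp_facts _ _ _ H) as [h1 [h2 [h3 [h4 h5]]]].
  pose proof H as H'. destruct H' as [hb [hab [hd0 hd]]].
  rewrite (dist_ptc _ _ _ _ _ _ _ H u1 u2 g).
  pose proof (D_of_Gp _ _ _ _ _ _ _ H u1 u2 g) as hD.
  pose proof (K0_pos a b d H).
  replace (fst (ptc a b s1 c1)/a^2 * (fst (ptc a b s2 c2) - fst (ptc a b s1 c1)) +
   snd (ptc a b s1 c1)/b^2 * (snd (ptc a b s2 c2) - snd (ptc a b s1 c1)))
   with ((c1^2-s1^2)*((c2^2-s2^2)-(c1^2-s1^2)) + (2*s1*c1)*(2*s2*c2-2*s1*c1))
   by (unfold ptc; cbn [fst snd]; field; split; lra).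
  rewrite (id_DOT _ _ _ _ u1 u2). unfold Dd in *.
  field. repeat split; try lra; auto.
Qed.

Lemma ell_ptc a b s c : 0 < a -> 0 < b -> s^2+c^2 = 1 -> on_ellipse a b (ptc a b s c).
Proof.
  intros ha hb u. unfold on_ellipse, ptc; cbn [fst snd].
  transitivity ((s^2+c^2)^2); [field; split; lra| rewrite u; ring].
Qed.

Lemma nondeg_Tri a b d s1 c1 s2 c2 s3 c3 : Hyp a b d -> Tri a b d s1 c1 s2 c2 s3 c3 ->
  nondegenerate (ptc a b s1 c1) (ptc a b s2 c2) (ptc a b s3 c3).
Proof.
  intros H T. destruct (Dall _ _ _ _ _ _ _ _ _ H T) as [D1 [D2 D3]].
  destruct (hyp_facts _ _ _ H) as [h1 [h2 [h3 [h4 h5]]]].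
  pose proof H as H'. destruct H' as [hb [hab [hd0 hd]]].
  pose proof T as T'. destruct T' as [u1 [u2 [u3 _]]].
  unfold nondegenerate, cross. rewrite (id_V3 a b s1 c1 s2 c2 s3 c3 u1 u2 u3).
  repeat apply Rmult_integral_contrapositive_currified; auto; lra.
Qed.

Lemma nb_Tri a b d s1 c1 s2 c2 s3 c3 : Hyp a b d -> Tri a b d s1 c1 s2 c2 s3 c3 ->
  normal_bisects a b (ptc a b s1 c1) (ptc a b s2 c2) (ptc a b s3 c3).
Proof.
  intros H T.
  destruct (hyp_facts _ _ _ H) as [h1 [h2 [h3 [h4 h5]]]].
  pose proof H as H'. destruct H' as [hb [hab [hd0 hd]]].
  pose proof T as T'. destruct T' as [u1 [u2 [u3 [g12 [g13 g23]]]]].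
  pose proof (nondeg_Tri _ _ _ _ _ _ _ _ _ H T) as ND. unfold nondegenerate, cross in ND.
  destruct (Dall _ _ _ _ _ _ _ _ _ H T) as [D1 [D2 D3]].
  pose proof (K0_pos a b d H) as hK.
  assert (dp12 : 0 < Defs.dist (ptc a b s1 c1) (ptc a b s2 c2)).
  { rewrite (dist_ptc _ _ _ _ _ _ _ H u1 u2 g12). apply Rmult_lt_0_compat; auto. apply sq_pos; auto. }
  assert (dp13 : 0 < Defs.dist (ptc a b s1 c1) (ptc a b s3 c3)).
  { rewrite (dist_ptc _ _ _ _ _ _ _ H u1 u3 g13). apply Rmult_lt_0_compat; auto. apply sq_pos.
    intro z. apply D2. unfold Dd in *. lra. }
  unfold normal_bisects, cross. cbv zeta.
  apply bis_vec.
  - intro z. destruct (sq0 (fst (ptc a b s1 c1) / a ^ 2) (snd (ptc a b s1 c1) / b ^ 2) 0) as [q1 [q2 _]]; [lra|].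
    pose proof (ell_ptc a b s1 c1 h5 hb u1) as E. unfold on_ellipse in E.
    assert (Z : fst (ptc a b s1 c1) = 0).
    { apply (Rmult_eq_reg_r (/a^2)); [|apply Rinv_neq_0_compat; apply pow_nonzero; lra]. unfold Rdiv in q1. lra. }
    assert (Z' : snd (ptc a b s1 c1) = 0).
    { apply (Rmult_eq_reg_r (/b^2)); [|apply Rinv_neq_0_compat; apply pow_nonzero; lra]. unfold Rdiv in q2. lra. }
    rewrite Z, Z' in E. lra.
  - exact dp12.
  - exact dp13.
  - unfold Defs.dist. rewrite pow2_sqrt; [ring|]. pose proof (pow2_ge_0 (fst (ptc a b s1 c1) - fst (ptc a b s2 c2))).
    pose proof (pow2_ge_0 (snd (ptc a b s1 c1) - snd (ptc a b s2 c2))). lra.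
  - unfold Defs.dist. rewrite pow2_sqrt; [ring|]. pose proof (pow2_ge_0 (fst (ptc a b s1 c1) - fst (ptc a b s3 c3))).
    pose proof (pow2_ge_0 (snd (ptc a b s1 c1) - snd (ptc a b s3 c3))). lra.
  - exact ND.
  - rewrite (dot_ratio _ _ _ _ _ _ _ H u1 u2 g12), (dot_ratio _ _ _ _ _ _ _ H u1 u3 g13). reflexivity.
Qed.

Lemma tp_Tri a b d s1 c1 s2 c2 s3 c3 : Hyp a b d -> Tri a b d s1 c1 s2 c2 s3 c3 ->
  three_periodic a b (ptc a b s1 c1) (ptc a b s2 c2) (ptc a b s3 c3).
Proof.
  intros H T.
  destruct (hyp_facts _ _ _ H) as [h1 [h2 [h3 [h4 h5]]]].
  pose proof H as H'. destruct H' as [hb [hab [hd0 hd]]].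
  pose proof T as T'. destruct T' as [u1 [u2 [u3 _]]].
  pose proof (Tri_rot _ _ _ _ _ _ _ _ _ T) as T2.
  pose proof (Tri_rot _ _ _ _ _ _ _ _ _ T2) as T3.
  unfold three_periodic. repeat split.
  - apply (nondeg_Tri _ _ _ _ _ _ _ _ _ H T).
  - apply ell_ptc; auto.
  - apply ell_ptc; auto.
  - apply ell_ptc; auto.
  - apply (nb_Tri _ _ _ _ _ _ _ _ _ H T).
  - apply (nb_Tri _ _ _ _ _ _ _ _ _ H T2).
  - apply (nb_Tri _ _ _ _ _ _ _ _ _ H T3).
Qed.


Lemma half_angle (A B : R) (P : pt) : 0 < A -> 0 < B -> on_ellipse A B P ->
  exists s c, s^2+c^2 = 1 /\ P = (A*(c^2-s^2), 2*B*s*c).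
Proof.
  intros hA hB hE. destruct P as [x y]. unfold on_ellipse in hE; cbn [fst snd] in hE.
  set (u := x/A). set (v := y/B).
  assert (huv : u^2 + v^2 = 1) by (unfold u, v; rewrite <- hE; field; split; lra).
  assert (hu1 : 0 <= 1+u) by (pose proof (pow2_ge_0 v); nra).
  assert (hu2 : 0 <= 1-u) by (pose proof (pow2_ge_0 v); nra).
  set (c := sqrt ((1+u)/2)). set (s0 := sqrt ((1-u)/2)).
  assert (hc : c^2 = (1+u)/2) by (apply pow2_sqrt; lra).
  assert (hs : s0^2 = (1-u)/2) by (apply pow2_sqrt; lra).
  assert (hc0 : 0 <= c) by apply sqrt_pos.
  assert (hs0 : 0 <= s0) by apply sqrt_pos.
  assert (hsc : (s0*c)^2 = (v/2)^2).
  { replace ((s0*c)^2) with (s0^2*c^2) by ring. rewrite hs, hc.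
    replace ((v/2)^2) with (v^2/4) by field. replace (v^2) with (1-u^2) by lra. field. }
  destruct (Rle_or_lt 0 v) as [hv|hv].
  - exists s0, c. split; [lra|].
    assert (e : s0*c = v/2) by (apply sq_inj; [apply Rmult_le_pos; auto| lra | auto]).
    f_equal.
    + replace (c^2-s0^2) with u by lra. unfold u; field; lra.
    + replace (2*B*s0*c) with (2*B*(s0*c)) by ring. rewrite e. unfold v; field; lra.
  - exists (-s0), c. split; [lra|].
    assert (e : s0*c = -(v/2)) by (apply sq_inj; [apply Rmult_le_pos; auto| lra | rewrite hsc; ring]).
    f_equal.
    + replace (c^2-(-s0)^2) with u by lra. unfold u; field; lra.
    + replace (2*B*(-s0)*c) with (-(2*B*(s0*c))) by ring. rewrite e. unfold v; field; lra.
Qed.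

Definition qf (a b : R) (P Q : pt) := (fst P - fst Q)^2/a^2 + (snd P - snd Q)^2/b^2.

Lemma dot_qf a b P Q : a <> 0 -> b <> 0 -> on_ellipse a b P -> on_ellipse a b Q ->
  fst P/a^2*(fst Q - fst P) + snd P/b^2*(snd Q - snd P) = - qf a b P Q / 2.
Proof.
  intros ha hb hP hQ. unfold on_ellipse, qf in *.
  assert (Z : fst P/a^2*(fst Q - fst P) + snd P/b^2*(snd Q - snd P) + qf a b P Q / 2 =
     ((fst Q ^ 2 / a ^ 2 + snd Q ^ 2 / b ^ 2) - (fst P ^ 2 / a ^ 2 + snd P ^ 2 / b ^ 2))/2)
    by (unfold qf; field; split; auto).
  rewrite hP, hQ in Z. unfold qf in Z. lra.
Qed.

Lemma XL_nonzero a b L s c : 0 < b -> b < a -> 0 < L -> s^2+c^2 = 1 ->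
  (ALc a b L s c)^2 + (- BLc a b L s c)^2 + (CLc a b L s c)^2 <> 0.
Proof.
  intros hb hab hL u h. destruct (sq0 _ _ _ h) as [e1 [e2 e3]].
  assert (hb2 : 0 < b^2) by (apply pow_lt; lra).
  assert (ha2 : 0 < a^2) by (apply pow_lt; lra).
  assert (E1 : L*(a^2+b^2) = a^2*b^2).
  { assert (Z : ALc a b L s c + CLc a b L s c = (L*(a^2+b^2) - a^2*b^2)*(s^2+c^2)) by (unfold ALc, CLc; ring).
    rewrite e1, e3, u in Z. lra. }
  assert (E2 : c^2 = s^2).
  { assert (Z : ALc a b L s c - CLc a b L s c = (c^2-s^2)*(L*(a^2-b^2) - a^2*b^2)) by (unfold ALc, CLc; ring).
    rewrite e1, e3 in Z. replace (L*(a^2-b^2) - a^2*b^2) with (-(2*L*b^2)) in Z by lra.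
    assert (0 < 2*L*b^2) by (apply Rmult_lt_0_compat; lra).
    assert (Z' : (c ^ 2 - s ^ 2) * - (2 * L * b ^ 2) = 0) by lra.
    destruct (Rmult_integral _ _ Z') as [z|z]; lra. }
  assert (E3 : s*c = 0).
  { assert (Z : - BLc a b L s c = -(2*(s*c))*(L*(a^2-b^2) + a^2*b^2)) by (unfold BLc; ring).
    rewrite e2 in Z.
    assert (0 < L*(a^2-b^2) + a^2*b^2).
    { assert (0 < a^2-b^2) by nra. assert (0 < L*(a^2-b^2)) by (apply Rmult_lt_0_compat; lra). nra. }
    assert (Z' : -(2*(s*c))*(L*(a^2-b^2) + a^2*b^2) = 0) by lra.
    destruct (Rmult_integral _ _ Z') as [z|z]; lra. }
  assert (s^2*s^2 = 0) by (rewrite <- E2 at 2; replace (s^2*c^2) with ((s*c)^2) by ring; rewrite E3; ring).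
  assert (s^2 = 0) by nra. lra.
Qed.

Lemma Q_rel a b d L : Hyp a b d -> 0 < L ->
  L^2*(a^2-b^2)^2+2*a^2*b^2*(a^2+b^2)*L-3*a^4*b^4 = 0 ->
  (a^2-b^2)^2*L = a^2*b^2*(2*d-a^2-b^2).
Proof.
  intros H hL hQ.
  destruct (hyp_facts _ _ _ H) as [h1 [h2 [h3 [h4 h5]]]].
  pose proof H as H'. destruct H' as [hb [hab [hd0 hd]]].
  set (u := (a^2-b^2)^2*L + a^2*b^2*(a^2+b^2)).
  assert (hb2 : 0 < b^2) by (apply pow_lt; lra).
  assert (ha2 : 0 < a^2) by (apply pow_lt; lra).
  assert (hab2 : 0 < a^2*b^2) by (apply Rmult_lt_0_compat; lra).
  assert (Z : (a^2-b^2)^2*(L^2*(a^2-b^2)^2+2*a^2*b^2*(a^2+b^2)*L-3*a^4*b^4) = u^2 - (2*a^2*b^2*d)^2).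
  { unfold u. replace ((2*a^2*b^2*d)^2) with (4*a^4*b^4*d^2) by ring. rewrite hd. ring. }
  rewrite hQ in Z.
  assert (hu : 0 < u).
  { unfold u. assert (0 < (a^2-b^2)^2) by (apply pow_lt; lra).
    assert (0 < (a^2-b^2)^2*L) by (apply Rmult_lt_0_compat; lra).
    assert (0 < a^2*b^2*(a^2+b^2)) by (apply Rmult_lt_0_compat; lra). lra. }
  assert (e : u = 2*a^2*b^2*d).
  { apply sq_inj; [lra| |lra]. assert (0 < 2*a^2*b^2*d) by (repeat apply Rmult_lt_0_compat; lra). lra. }
  unfold u in e. lra.
Qed.


Lemma cross_sq_pos ux uy vx vy : ux*vy - uy*vx <> 0 -> 0 < ux^2+uy^2.
Proof.
  intros h. destruct (Rle_or_lt (ux^2+uy^2) 0) as [z|z]; auto.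
  exfalso. apply h. destruct (sq0 ux uy 0) as [q1 [q2 _]].
  - pose proof (pow2_ge_0 ux). pose proof (pow2_ge_0 uy). lra.
  - rewrite q1, q2; ring.
Qed.

Lemma dist_sq P Q : (Defs.dist P Q)^2 = (fst P - fst Q)^2 + (snd P - snd Q)^2.
Proof.
  unfold Defs.dist. apply pow2_sqrt.
  pose proof (pow2_ge_0 (fst P - fst Q)). pose proof (pow2_ge_0 (snd P - snd Q)). lra.
Qed.

Lemma dsym P Q : Defs.dist P Q = Defs.dist Q P.
Proof. unfold Defs.dist. f_equal. ring. Qed.

Lemma dist_pos P Q : 0 < (fst P - fst Q)^2 + (snd P - snd Q)^2 -> 0 < Defs.dist P Q.
Proof. intros h. unfold Defs.dist. apply sqrt_lt_R0; auto. Qed.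

Lemma qf_ptc a b s1 c1 s2 c2 : 0 < a -> 0 < b -> s1^2+c1^2=1 -> s2^2+c2^2=1 ->
  qf a b (ptc a b s1 c1) (ptc a b s2 c2) = 4*(Dd s1 c1 s2 c2)^2.
Proof.
  intros ha hb u1 u2. pose proof (id_V2 a b s1 c1 s2 c2 u1 u2) as V.
  unfold qf. apply (Rmult_eq_reg_r (a^2*b^2)).
  - transitivity ((fst (ptc a b s1 c1) - fst (ptc a b s2 c2))^2*b^2 + (snd (ptc a b s1 c1) - snd (ptc a b s2 c2))^2*a^2).
    + field. split; lra.
    + rewrite V. ring.
  - apply Rmult_integral_contrapositive_currified; apply pow_nonzero; lra.
Qed.

Lemma pairGL a b s1 c1 s2 c2 r : 0 < b -> b < a -> s1^2+c1^2=1 -> s2^2+c2^2=1 -> 0 < r ->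
  0 < Defs.dist (ptc a b s1 c1) (ptc a b s2 c2) ->
  qf a b (ptc a b s1 c1) (ptc a b s2 c2) = r * Defs.dist (ptc a b s1 c1) (ptc a b s2 c2) ->
  GL a b (a^2*b^2*r^2/4) s1 c1 s2 c2 = 0 /\ Dd s1 c1 s2 c2 <> 0.
Proof.
  intros hb hab u1 u2 hr hd hq.
  rewrite (qf_ptc a b s1 c1 s2 c2) in hq by (auto; lra).
  set (D := Dd s1 c1 s2 c2) in *.
  set (dd := Defs.dist (ptc a b s1 c1) (ptc a b s2 c2)) in *.
  assert (hD : D <> 0).
  { intro z. rewrite z in hq. assert (0 < r*dd) by (apply Rmult_lt_0_compat; lra). lra. }
  split; auto.
  pose proof (id_V4 a b (a^2*b^2*r^2/4) s1 c1 s2 c2 u1 u2) as V. fold D in V.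
  rewrite <- dist_sq in V. fold dd in V.
  assert (E : a ^ 2 * b ^ 2 * r ^ 2 / 4 * dd ^ 2 = 4 * a ^ 2 * b ^ 2 * D ^ 4).
  { replace (a ^ 2 * b ^ 2 * r ^ 2 / 4 * dd ^ 2) with (a^2*b^2*(r*dd)^2/4) by field.
    rewrite <- hq. field. }
  rewrite E in V.
  assert (Z : 4*D^2 * GL a b (a ^ 2 * b ^ 2 * r ^ 2 / 4) s1 c1 s2 c2 = 0) by lra.
  destruct (Rmult_integral _ _ Z) as [z|z]; auto.
  exfalso. apply hD. apply sq_eq0. lra.
Qed.

Lemma bis_qf a b P Q S : 0 < a -> 0 < b -> on_ellipse a b P -> on_ellipse a b Q -> on_ellipse a b S ->
  cross (fst Q - fst P) (snd Q - snd P) (fst S - fst P) (snd S - snd P) <> 0 ->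
  normal_bisects a b P Q S ->
  qf a b P Q / Defs.dist P Q = qf a b P S / Defs.dist P S /\ 0 < Defs.dist P Q /\ 0 < Defs.dist P S.
Proof.
  intros ha hb hP hQ hS hc hn.
  unfold cross in hc.
  assert (d2 : 0 < Defs.dist P Q).
  { apply dist_pos. pose proof (cross_sq_pos _ _ _ _ hc). replace ((fst P - fst Q)^2 + (snd P - snd Q)^2) with
       ((fst Q - fst P)^2 + (snd Q - snd P)^2) by ring. auto. }
  assert (d3 : 0 < Defs.dist P S).
  { apply dist_pos.
    assert (hc' : (fst S - fst P)*(snd Q - snd P) - (snd S - snd P)*(fst Q - fst P) <> 0) by (intro z; apply hc; lra).
    pose proof (cross_sq_pos _ _ _ _ hc'). replace ((fst P - fst S)^2 + (snd P - snd S)^2) with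
       ((fst S - fst P)^2 + (snd S - snd P)^2) by ring. auto. }
  split; [|split; auto].
  unfold normal_bisects, cross in hn. cbv zeta in hn.
  pose proof (eq_vec (fst P / a^2) (snd P / b^2) (fst Q - fst P) (snd Q - snd P) (fst S - fst P) (snd S - snd P)
     (Defs.dist P Q) (Defs.dist P S) d2 d3) as EV.
  rewrite !dist_sq in EV.
  assert (EV' : (fst P / a ^ 2 * (fst Q - fst P) + snd P / b ^ 2 * (snd Q - snd P)) / Defs.dist P Q =
       (fst P / a ^ 2 * (fst S - fst P) + snd P / b ^ 2 * (snd S - snd P)) / Defs.dist P S).
  { apply EV; try ring; auto. }
  rewrite (dot_qf a b P Q), (dot_qf a b P S) in EV' by (auto; lra).
  apply (Rmult_eq_reg_l (-1/2)); [|lra].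
  replace (-1/2 * (qf a b P Q / Defs.dist P Q)) with (- qf a b P Q / 2 / Defs.dist P Q) by (field; lra).
  replace (-1/2 * (qf a b P S / Defs.dist P S)) with (- qf a b P S / 2 / Defs.dist P S) by (field; lra).
  exact EV'.
Qed.


Lemma qf_sym a b P Q : qf a b P Q = qf a b Q P.
Proof. unfold qf. destruct P as [p1 p2]; destruct Q as [q1 q2]; cbn [fst snd].
  replace ((q1-p1)^2) with ((p1-q1)^2) by ring. replace ((q2-p2)^2) with ((p2-q2)^2) by ring. reflexivity. Qed.

Lemma Pos_pos a b s c : 0 < b -> b < a -> s^2+c^2 = 1 -> 0 < b^2*(s^4+c^4)+(4*a^2-2*b^2)*s^2*c^2.
Proof.
  intros hb hab u.
  replace (b^2*(s^4+c^4)+(4*a^2-2*b^2)*s^2*c^2) with (b^2*(s^2-c^2)^2 + 4*a^2*(s*c)^2) by ring.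
  assert (hb2 : 0 < b^2) by (apply pow_lt; lra).
  assert (ha2 : 0 < a^2) by (apply pow_lt; lra).
  pose proof (pow2_ge_0 (s^2-c^2)). pose proof (pow2_ge_0 (s*c)).
  destruct (Req_dec (s*c) 0) as [z|z].
  - assert (0 < (s^2-c^2)^2).
    { apply sq_pos. intro w. assert (s^2*s^2 = 0) by (replace (s^2*s^2) with (s^2*c^2 + s^2*(s^2-c^2)) by ring;
        rewrite w; replace (s^2*c^2) with ((s*c)^2) by ring; rewrite z; ring).
      assert (s^2 = 0) by nra. lra. }
    nra.
  - assert (0 < (s*c)^2) by (apply sq_pos; auto). nra.
Qed.

Lemma Tri_of_tp a b d P1 P2 P3 : Hyp a b d -> three_periodic a b P1 P2 P3 ->
  exists s1 c1 s2 c2 s3 c3, Tri a b d s1 c1 s2 c2 s3 c3 /\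
    P1 = ptc a b s1 c1 /\ P2 = ptc a b s2 c2 /\ P3 = ptc a b s3 c3.
Proof.
  intros H [ND [E1 [E2 [E3 [B1 [B2 B3]]]]]].
  destruct (hyp_facts _ _ _ H) as [h1 [h2 [h3 [h4 h5]]]].
  pose proof H as H'. destruct H' as [hb [hab [hd0 hd]]].
  pose proof (bis_qf a b P1 P2 P3 h5 hb E1 E2 E3 ND B1) as [Q1 [d12 d13]].
  assert (ND2 : cross (fst P3 - fst P2) (snd P3 - snd P2) (fst P1 - fst P2) (snd P1 - snd P2) <> 0).
  { unfold nondegenerate, cross in *. intro z. apply ND. lra. }
  pose proof (bis_qf a b P2 P3 P1 h5 hb E2 E3 E1 ND2 B2) as [Q2 [d23 d21]].
  destruct (half_angle a b P1 h5 hb E1) as [s1 [c1 [u1 e1]]].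
  destruct (half_angle a b P2 h5 hb E2) as [s2 [c2 [u2 e2]]].
  destruct (half_angle a b P3 h5 hb E3) as [s3 [c3 [u3 e3]]].
  change (a * (c1 ^ 2 - s1 ^ 2), 2 * b * s1 * c1) with (ptc a b s1 c1) in e1.
  change (a * (c2 ^ 2 - s2 ^ 2), 2 * b * s2 * c2) with (ptc a b s2 c2) in e2.
  change (a * (c3 ^ 2 - s3 ^ 2), 2 * b * s3 * c3) with (ptc a b s3 c3) in e3.
  subst P1 P2 P3.
  set (r := qf a b (ptc a b s1 c1) (ptc a b s2 c2) / Defs.dist (ptc a b s1 c1) (ptc a b s2 c2)).
  assert (hq12 : 0 < qf a b (ptc a b s1 c1) (ptc a b s2 c2)).
  { pose proof (dist_sq (ptc a b s1 c1) (ptc a b s2 c2)) as ds.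
    assert (0 < (Defs.dist (ptc a b s1 c1) (ptc a b s2 c2))^2) by (apply pow_lt; lra).
    set (X := fst (ptc a b s1 c1) - fst (ptc a b s2 c2)) in *.
    set (Y := snd (ptc a b s1 c1) - snd (ptc a b s2 c2)) in *.
    unfold qf. fold X Y.
    assert (hb2 : 0 < b^2) by (apply pow_lt; lra).
    assert (hab2 : b^2 <= a^2) by lra.
    pose proof (pow2_ge_0 X). pose proof (pow2_ge_0 Y).
    replace (X^2/a^2 + Y^2/b^2) with ((X^2*b^2 + Y^2*a^2)/(a^2*b^2)) by (field; split; lra).
    apply Rdiv_lt_0_compat; [|apply Rmult_lt_0_compat; lra]. nra. }
  assert (hr : 0 < r) by (unfold r; apply Rdiv_lt_0_compat; auto).
  assert (q12 : qf a b (ptc a b s1 c1) (ptc a b s2 c2) = r * Defs.dist (ptc a b s1 c1) (ptc a b s2 c2))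
    by (unfold r; field; lra).
  assert (q13 : qf a b (ptc a b s1 c1) (ptc a b s3 c3) = r * Defs.dist (ptc a b s1 c1) (ptc a b s3 c3)).
  { unfold r. rewrite Q1. field; lra. }
  assert (q23 : qf a b (ptc a b s2 c2) (ptc a b s3 c3) = r * Defs.dist (ptc a b s2 c2) (ptc a b s3 c3)).
  { assert (e : qf a b (ptc a b s2 c2) (ptc a b s1 c1) = qf a b (ptc a b s1 c1) (ptc a b s2 c2)) by (apply qf_sym).
    rewrite e, (dsym (ptc a b s2 c2) (ptc a b s1 c1)) in Q2. fold r in Q2.
    rewrite <- Q2. field; lra. }
  set (L := a^2*b^2*r^2/4).
  assert (hL : 0 < L).
  { unfold L. assert (0 < r^2) by (apply pow_lt; lra).
    assert (0 < a^2) by (apply pow_lt; lra). assert (0 < b^2) by (apply pow_lt; lra).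
    assert (0 < a^2*b^2*r^2) by (apply Rmult_lt_0_compat; [apply Rmult_lt_0_compat|]; assumption). lra. }
  destruct (pairGL a b s1 c1 s2 c2 r hb hab u1 u2 hr d12 q12) as [G12 D12].
  destruct (pairGL a b s1 c1 s3 c3 r hb hab u1 u3 hr d13 q13) as [G13 D13].
  destruct (pairGL a b s2 c2 s3 c3 r hb hab u2 u3 hr d23 q23) as [G23 D23].
  fold L in G12, G13, G23.
  assert (QL : L^2*(a^2-b^2)^2+2*a^2*b^2*(a^2+b^2)*L-3*a^4*b^4 = 0).
  { pose proof G12 as G12'. pose proof G13 as G13'.
    rewrite GL_quad in G12', G13'.
    destruct (closure_par _ _ _ s2 c2 s3 c3 G12' G13' D23 (XL_nonzero a b L s1 c1 hb hab hL u1)) as [k [k1 [k2 k3]]].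
    assert (k0 : k <> 0).
    { intro z. apply (n_nonzero _ _ _ _ D23). rewrite k1, k2, k3, z. ring. }
    rewrite GL_F, k1, k2, k3, FLf_hom, id_EL in G23.
    assert (0 < k^2) by (apply sq_pos; auto).
    pose proof (Pos_pos a b s1 c1 hb hab u1).
    destruct (Rmult_integral _ _ G23) as [z|z]; [lra|].
    destruct (Rmult_integral _ _ z) as [z1|z1]; [|lra].
    destruct (Rmult_integral _ _ z1) as [z2|z2]; [lra|exact z2]. }
  pose proof (Q_rel a b d L H hL QL) as REL.
  assert (GpGL : forall x1 y1 x2 y2, GL a b L x1 y1 x2 y2 = 0 -> Gp a b d x1 y1 x2 y2 = 0).
  { intros x1 y1 x2 y2 g.
    assert (Z : a^2*b^2*Gp a b d x1 y1 x2 y2 = (a^2-b^2)^2*GL a b L x1 y1 x2 y2 +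
        (a^2*(x1*y2+x2*y1)^2 + b^2*(y1*y2-x1*x2)^2)*(a^2*b^2*(2*d-a^2-b^2) - (a^2-b^2)^2*L))
      by (unfold Gp, GL; ring).
    rewrite g, REL in Z.
    assert (0 < a^2*b^2) by (apply Rmult_lt_0_compat; apply pow_lt; lra).
    assert (Z' : a^2*b^2*Gp a b d x1 y1 x2 y2 = 0) by (rewrite Z; ring).
    destruct (Rmult_integral _ _ Z') as [z|z]; [lra|exact z]. }
  exists s1, c1, s2, c2, s3, c3. repeat split; auto.
Qed.


Lemma monic_cubic_root q2 q1 q0 : exists x, x^3 + q2*x^2 + q1*x + q0 = 0.
Proof.
  set (S := Rabs q2 + Rabs q1 + Rabs q0).
  set (M := 1 + S).
  assert (hS : 0 <= S) by (unfold S; pose proof (Rabs_pos q2); pose proof (Rabs_pos q1); pose proof (Rabs_pos q0); lra).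
  assert (hM : 1 <= M) by (unfold M; lra).
  assert (hM2 : 1 <= M^2) by nra.
  assert (hMM : M <= M^2) by nra.
  pose proof (Rle_abs q2) as a2. pose proof (Rle_abs q1) as a1. pose proof (Rle_abs q0) as a0.
  pose proof (Rle_abs (-q2)) as b2. pose proof (Rle_abs (-q1)) as b1. pose proof (Rle_abs (-q0)) as b0.
  rewrite Rabs_Ropp in b2, b1, b0.
  assert (t2 : Rabs q2 * M^2 >= - q2 * M^2 /\ Rabs q2 * M^2 >= q2 * M^2).
  { split; apply Rle_ge; apply Rmult_le_compat_r; nra. }
  assert (t1 : Rabs q1 * M^2 >= - q1 * M /\ Rabs q1 * M^2 >= q1 * M).
  { assert (Rabs q1 * M <= Rabs q1 * M^2) by (apply Rmult_le_compat_l; [apply Rabs_pos|auto]).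
    split; apply Rle_ge; [apply Rle_trans with (Rabs q1 * M)|apply Rle_trans with (Rabs q1 * M)]; auto;
      apply Rmult_le_compat_r; lra. }
  assert (t0 : Rabs q0 * M^2 >= - q0 /\ Rabs q0 * M^2 >= q0).
  { assert (Rabs q0 <= Rabs q0 * M^2) by (rewrite <- (Rmult_1_r (Rabs q0)) at 1; apply Rmult_le_compat_l; [apply Rabs_pos|auto]).
    lra. }
  assert (e3 : M^3 = M * M^2) by ring.
  assert (fM : 0 < M^3 + q2*M^2 + q1*M + q0).
  { assert (M^3 - S*M^2 = M^2) by (rewrite e3; unfold M; ring).
    assert (S*M^2 = Rabs q2 * M^2 + Rabs q1 * M^2 + Rabs q0 * M^2) by (unfold S; ring). lra. }
  assert (fm : (-M)^3 + q2*(-M)^2 + q1*(-M) + q0 < 0).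
  { assert (M^3 - S*M^2 = M^2) by (rewrite e3; unfold M; ring).
    assert (S*M^2 = Rabs q2 * M^2 + Rabs q1 * M^2 + Rabs q0 * M^2) by (unfold S; ring).
    replace ((-M)^3) with (-(M^3)) by ring. replace ((-M)^2) with (M^2) by ring. lra. }
  destruct (IVT (fun x => x^3 + q2*x^2 + q1*x + q0) (-M) M) as [x [_ hx]].
  - reg.
  - lra.
  - exact fm.
  - exact fM.
  - exists x. exact hx.
Qed.

Lemma cubic_root p3 p2 p1 p0 : p3 <> 0 -> exists x, p3*x^3 + p2*x^2 + p1*x + p0 = 0.
Proof.
  intros h. destruct (monic_cubic_root (p2/p3) (p1/p3) (p0/p3)) as [x hx].
  exists x. replace (p3*x^3 + p2*x^2 + p1*x + p0) with (p3*(x^3 + p2/p3*x^2 + p1/p3*x + p0/p3)) by (field; auto).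
  rewrite hx. ring.
Qed.

Lemma quad_roots A B C : 0 < B^2 - 4*A*C ->
  exists y2 z2 y3 z3, A*y2^2 + B*y2*z2 + C*z2^2 = 0 /\ A*y3^2 + B*y3*z3 + C*z3^2 = 0 /\ y2*z3 - y3*z2 <> 0.
Proof.
  intros hD.
  destruct (Req_dec A 0) as [hA|hA].
  - subst A. assert (hB : B <> 0) by (intro z; subst B; lra).
    exists 1, 0, (-C), B. split; [ring|split; [ring|]]. replace (1*B - (-C)*0) with B by ring. auto.
  - set (r := sqrt (B^2-4*A*C)).
    assert (hr : r^2 = B^2-4*A*C) by (apply pow2_sqrt; lra).
    assert (hr0 : 0 < r) by (apply sqrt_lt_R0; lra).
    exists (-B+r), (2*A), (-B-r), (2*A). split; [|split].
    + transitivity (A*(r^2 - (B^2-4*A*C))); [ring| rewrite hr; ring].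
    + transitivity (A*(r^2 - (B^2-4*A*C))); [ring| rewrite hr; ring].
    + replace ((-B+r)*(2*A) - (-B-r)*(2*A)) with (4*A*r) by ring.
      repeat apply Rmult_integral_contrapositive_currified; lra.
Qed.

Lemma quad_unit_roots A B C : 0 < B^2 - 4*A*C ->
  exists s2 c2 s3 c3, s2^2+c2^2 = 1 /\ s3^2+c3^2 = 1 /\
    A*s2^2 + B*s2*c2 + C*c2^2 = 0 /\ A*s3^2 + B*s3*c3 + C*c3^2 = 0 /\ Dd s2 c2 s3 c3 <> 0.
Proof.
  intros hD. destruct (quad_roots A B C hD) as [y2 [z2 [y3 [z3 [q2 [q3 hd]]]]]].
  assert (n2 : 0 < y2^2+z2^2).
  { apply (cross_sq_pos y2 z2 y3 z3). intro z; apply hd; lra. }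
  assert (n3 : 0 < y3^2+z3^2).
  { apply (cross_sq_pos y3 z3 y2 z2). intro z; apply hd; lra. }
  set (N2 := sqrt (y2^2+z2^2)). set (N3 := sqrt (y3^2+z3^2)).
  assert (e2 : N2^2 = y2^2+z2^2) by (apply pow2_sqrt; lra).
  assert (e3 : N3^2 = y3^2+z3^2) by (apply pow2_sqrt; lra).
  assert (p2 : 0 < N2) by (apply sqrt_lt_R0; lra).
  assert (p3 : 0 < N3) by (apply sqrt_lt_R0; lra).
  exists (y2/N2), (z2/N2), (y3/N3), (z3/N3). repeat split.
  - replace ((y2/N2)^2 + (z2/N2)^2) with ((y2^2+z2^2)/N2^2) by (field; lra). rewrite e2. field; lra.
  - replace ((y3/N3)^2 + (z3/N3)^2) with ((y3^2+z3^2)/N3^2) by (field; lra). rewrite e3. field; lra.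
  - replace (A * (y2 / N2) ^ 2 + B * (y2 / N2) * (z2 / N2) + C * (z2 / N2) ^ 2)
      with ((A*y2^2 + B*y2*z2 + C*z2^2)/N2^2) by (field; lra). rewrite q2. field; lra.
  - replace (A * (y3 / N3) ^ 2 + B * (y3 / N3) * (z3 / N3) + C * (z3 / N3) ^ 2)
      with ((A*y3^2 + B*y3*z3 + C*z3^2)/N3^2) by (field; lra). rewrite q3. field; lra.
  - unfold Dd. replace (y2 / N2 * (z3 / N3) - y3 / N3 * (z2 / N2)) with ((y2*z3 - y3*z2)/(N2*N3)) by (field; lra).
    intro z. apply hd. apply (Rmult_eq_reg_r (/(N2*N3))).
    + rewrite Rmult_0_l. exact z.
    + apply Rinv_neq_0_compat. apply Rmult_integral_contrapositive_currified; lra.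
Qed.

Lemma construct a b d s1 c1 : Hyp a b d -> s1^2+c1^2 = 1 ->
  exists s2 c2 s3 c3, Tri a b d s1 c1 s2 c2 s3 c3.
Proof.
  intros H u1.
  destruct (hyp_facts _ _ _ H) as [h1 [h2 [h3 [h4 h5]]]].
  pose proof H as H'. destruct H' as [hb [hab [hd0 hd]]].
  assert (hD : 0 < (Bc a b d s1 c1)^2 - 4*Ac a b d s1 c1*Cc a b d s1 c1).
  { rewrite (id_DISC a b d s1 c1 hd u1). apply Rmult_lt_0_compat; [lra|].
    assert (0 <= (a^2-b^2)^3*(s1^2*c1^2)).
    { apply Rmult_le_pos; [apply pow_le; lra|]. replace (s1^2*c1^2) with ((s1*c1)^2) by ring. apply pow2_ge_0. }
    assert (0 < b^2*(a^2-d)^2) by (apply Rmult_lt_0_compat; apply pow_lt; lra).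
    lra. }
  destruct (quad_unit_roots _ _ _ hD) as [s2 [c2 [s3 [c3 [u2 [u3 [q2 [q3 hd23]]]]]]]].
  exists s2, c2, s3, c3.
  apply tri_complete; auto; rewrite Gp_quad; auto.
Qed.


Lemma formula_of_par a b d s c s0 c0 : Hyp a b d -> s^2+c^2 = 1 -> s0^2+c0^2 = 1 ->
  Fw a b d s c * s0 - Hw a b d s c * c0 = 0 ->
  ((d-b^2)/a * (((Fw a b d s c)^2 - (Hw a b d s c)^2) / ((Fw a b d s c)^2 + (Hw a b d s c)^2)),
   (a^2-d)/b * ((2*Fw a b d s c*Hw a b d s c) / ((Fw a b d s c)^2 + (Hw a b d s c)^2)))
  = ((d-b^2)/a*(c0^2-s0^2), 2*((a^2-d)/b)*s0*c0).
Proof.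
  intros H u u0 hp.
  destruct (hyp_facts _ _ _ H) as [h1 [h2 [h3 [h4 h5]]]].
  pose proof H as H'. destruct H' as [hb [hab [hd0 hd]]].
  pose proof (W1_pos a b d s c H u) as hW.
  set (F := Fw a b d s c) in *. set (G := Hw a b d s c) in *.
  set (r := F*c0 + G*s0).
  assert (eF : F = r*c0).
  { assert (Z : F - r*c0 = s0*(F*s0 - G*c0) + F*(1 - (s0^2+c0^2))) by (unfold r; ring).
    rewrite hp, u0 in Z. lra. }
  assert (eG : G = r*s0).
  { assert (Z : G - r*s0 = -c0*(F*s0 - G*c0) + G*(1 - (s0^2+c0^2))) by (unfold r; ring).
    rewrite hp, u0 in Z. lra. }
  assert (hr2 : F^2+G^2 = r^2) by (rewrite eF, eG; transitivity (r^2*(s0^2+c0^2)); [ring|rewrite u0; ring]).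
  rewrite hr2 in *.
  assert (hr : r <> 0) by (intro z; rewrite z in hW; lra).
  rewrite eF, eG. f_equal; field; repeat split; auto; lra.
Qed.

Lemma inv_incenter a b d X : Hyp a b d -> on_ellipse ((d-b^2)/a) ((a^2-d)/b) X ->
  exists s c, s^2+c^2 = 1 /\
  X = ((d-b^2)/a * (((Fw a b d s c)^2 - (Hw a b d s c)^2) / ((Fw a b d s c)^2 + (Hw a b d s c)^2)),
   (a^2-d)/b * ((2*Fw a b d s c*Hw a b d s c) / ((Fw a b d s c)^2 + (Hw a b d s c)^2))).
Proof.
  intros H hX.
  destruct (hyp_facts _ _ _ H) as [h1 [h2 [h3 [h4 h5]]]].
  pose proof H as H'. destruct H' as [hb [hab [hd0 hd]]].
  assert (ha1 : 0 < (d-b^2)/a) by (apply Rdiv_lt_0_compat; lra).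
  assert (hb1 : 0 < (a^2-d)/b) by (apply Rdiv_lt_0_compat; lra).
  destruct (half_angle _ _ X ha1 hb1 hX) as [s0 [c0 [u0 eX]]].
  assert (ex : exists s c, s^2+c^2 = 1 /\ Fw a b d s c * s0 - Hw a b d s c * c0 = 0).
  { destruct (Req_dec s0 0) as [z|z].
    - exists 1, 0. split; [ring|]. rewrite z. unfold Fw, Hw. ring.
    - destruct (cubic_root ((a^2-d)*s0) ((2*(d-b^2)+(a^2-d))*c0) (-((a^2-d)+2*(d-b^2))*s0) (-(a^2-d)*c0))
        as [x hx].
      { apply Rmult_integral_contrapositive_currified; lra. }
      set (N := sqrt (x^2+1)).
      assert (eN : N^2 = x^2+1) by (apply pow2_sqrt; pose proof (pow2_ge_0 x); lra).
      assert (pN : 0 < N) by (apply sqrt_lt_R0; pose proof (pow2_ge_0 x); lra).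
      exists (x/N), (1/N). split.
      + replace ((x/N)^2 + (1/N)^2) with ((x^2+1)/N^2) by (field; lra). rewrite eN. field. pose proof (pow2_ge_0 x); lra.
      + replace (Fw a b d (x / N) (1 / N) * s0 - Hw a b d (x / N) (1 / N) * c0)
          with (((a^2-d)*s0*x^3 + ((2*(d-b^2)+(a^2-d))*c0)*x^2 + (-((a^2-d)+2*(d-b^2))*s0)*x + (-(a^2-d)*c0))/N^3)
          by (unfold Fw, Hw; field; lra).
        rewrite hx. field. lra. }
  destruct ex as [s [c [u hp]]].
  exists s, c. split; auto.
  rewrite (formula_of_par a b d s c s0 c0 H u u0 hp). rewrite eX. reflexivity.
Qed.

Lemma trilin_rot1 P1 P2 P3 : trilinear_point 1 (-1) 1 P1 P2 P3 = trilinear_point (-1) 1 1 P2 P3 P1.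
Proof. unfold trilinear_point. cbv zeta. f_equal; apply div_eq; ring. Qed.

Lemma trilin_rot2 P1 P2 P3 : trilinear_point 1 1 (-1) P1 P2 P3 = trilinear_point (-1) 1 1 P3 P1 P2.
Proof. unfold trilinear_point. cbv zeta. f_equal; apply div_eq; ring. Qed.

Lemma exc_on_ell a b d s c : Hyp a b d -> s^2+c^2 = 1 ->
  on_ellipse ((b^2+d)/a) ((a^2+d)/b)
    (-((b^2+d)/a^2) * fst (ptc a b s c), -((a^2+d)/b^2) * snd (ptc a b s c)).
Proof.
  intros H u.
  destruct (hyp_facts _ _ _ H) as [h1 [h2 [h3 [h4 h5]]]].
  pose proof H as H'. destruct H' as [hb [hab [hd0 hd]]].
  pose proof (ell_ptc a b s c h5 hb u) as E. unfold on_ellipse in *. cbn [fst snd] in *.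
  rewrite <- E. field. assert (0 < b^2) by (apply pow_lt; lra). repeat split; lra.
Qed.

Lemma hyp_delta a b : 0 < b -> b < a -> Hyp a b (delta a b).
Proof.
  intros hb hab. unfold delta.
  assert (hp : 0 < a^4 - a^2*b^2 + b^4).
  { replace (a^4 - a^2*b^2 + b^4) with ((a^2 - b^2/2)^2 + 3/4*(b^2)^2) by field.
    assert (0 < (b^2)^2) by (apply pow_lt; apply pow_lt; lra). pose proof (pow2_ge_0 (a^2-b^2/2)). lra. }
  repeat split; auto.
  - apply sqrt_lt_R0; auto.
  - apply pow2_sqrt; lra.
Qed.


Theorem theorem1 (a b : R) (hb : 0 < b) (hab : b < a) :
  (forall X : pt,
     (exists P1 P2 P3 : pt, three_periodic a b P1 P2 P3 /\ X = incenter P1 P2 P3)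
     <-> on_ellipse ((delta a b - b ^ 2) / a) ((a ^ 2 - delta a b) / b) X) /\
  (forall X : pt,
     (exists P1 P2 P3 : pt, three_periodic a b P1 P2 P3 /\ is_excenter X P1 P2 P3)
     <-> on_ellipse ((b ^ 2 + delta a b) / a) ((a ^ 2 + delta a b) / b) X).
Proof.
  pose proof (hyp_delta a b hb hab) as H.
  set (d := delta a b) in *.
  destruct (hyp_facts _ _ _ H) as [h1 [h2 [h3 [h4 h5]]]].
  pose proof H as H'. destruct H' as [_ [_ [hd0 hd]]].
  split.
  - intros X. split.
    + intros [P1 [P2 [P3 [Htp eX]]]].
      destruct (Tri_of_tp a b d P1 P2 P3 H Htp) as [s1 [c1 [s2 [c2 [s3 [c3 [T [e1 [e2 e3]]]]]]]]].
      subst P1 P2 P3 X.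
      rewrite (incenter_formula _ _ _ _ _ _ _ _ _ H T).
      pose proof (W1_pos a b d s1 c1 H (proj1 T)) as hW.
      unfold on_ellipse. cbn [fst snd].
      set (F := Fw a b d s1 c1) in *. set (G := Hw a b d s1 c1) in *.
      assert (ha1 : 0 < (d-b^2)/a) by (apply Rdiv_lt_0_compat; lra).
      assert (hb1 : 0 < (a^2-d)/b) by (apply Rdiv_lt_0_compat; lra).
      transitivity (((F^2-G^2)^2 + (2*F*G)^2)/(F^2+G^2)^2).
      * field. repeat split; lra.
      * replace ((F^2-G^2)^2 + (2*F*G)^2) with ((F^2+G^2)^2) by ring. field. lra.
    + intros hX.
      destruct (inv_incenter a b d X H hX) as [s [c [u eX]]].
      destruct (construct a b d s c H u) as [s2 [c2 [s3 [c3 T]]]].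
      exists (ptc a b s c), (ptc a b s2 c2), (ptc a b s3 c3). split.
      * apply (tp_Tri _ _ _ _ _ _ _ _ _ H T).
      * rewrite (incenter_formula _ _ _ _ _ _ _ _ _ H T). exact eX.
  - intros X. split.
    + intros [P1 [P2 [P3 [Htp eX]]]].
      destruct (Tri_of_tp a b d P1 P2 P3 H Htp) as [s1 [c1 [s2 [c2 [s3 [c3 [T [e1 [e2 e3]]]]]]]]].
      subst P1 P2 P3.
      pose proof (Tri_rot _ _ _ _ _ _ _ _ _ T) as T2.
      pose proof (Tri_rot _ _ _ _ _ _ _ _ _ T2) as T3.
      destruct T as [u1 [u2 [u3 _]]].
      destruct eX as [E|[E|E]].
      * rewrite E, (excenter1_formula _ _ _ _ _ _ _ _ _ H (Tri_rot _ _ _ _ _ _ _ _ _ T3)).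
        apply exc_on_ell; auto.
      * rewrite E, trilin_rot1, (excenter1_formula _ _ _ _ _ _ _ _ _ H T2).
        apply exc_on_ell; auto.
      * rewrite E, trilin_rot2, (excenter1_formula _ _ _ _ _ _ _ _ _ H T3).
        apply exc_on_ell; auto.
    + intros hY.
      set (P1 := (-(a^2/(b^2+d))*fst X, -(b^2/(a^2+d))*snd X)).
      assert (hP1 : on_ellipse a b P1).
      { unfold on_ellipse in *. unfold P1. cbn [fst snd]. rewrite <- hY. field.
        assert (0 < b^2) by (apply pow_lt; lra). repeat split; lra. }
      destruct (half_angle a b P1 h5 hb hP1) as [s1 [c1 [u1 e1]]].
      change (a * (c1 ^ 2 - s1 ^ 2), 2 * b * s1 * c1) with (ptc a b s1 c1) in e1.
      destruct (construct a b d s1 c1 H u1) as [s2 [c2 [s3 [c3 T]]]].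
      exists (ptc a b s1 c1), (ptc a b s2 c2), (ptc a b s3 c3). split.
      * apply (tp_Tri _ _ _ _ _ _ _ _ _ H T).
      * left. rewrite (excenter1_formula _ _ _ _ _ _ _ _ _ H T). rewrite <- e1.
        unfold P1. cbn [fst snd]. destruct X as [x y]. cbn [fst snd].
        assert (0 < b^2) by (apply pow_lt; lra).
        f_equal; field; repeat split; lra.
Qed.
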